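(* For every elementary pair $(p,q)$ of partial isomorphisms of $\mathbb{Q}$ and every reduced word $u\in F(s,t)$ there exist a word $v$ and partial isomorphisms $p',q'$ such that $|vu|=|v|+|u|$ and $(p',q',vu)$ liberates $p$ in $(p,q)$; likewise there exist such $v,p',q'$ with $(p',q',vu)$ liberating $q$ in $(p,q)$.
   Context: A partial isomorphism of $\mathbb{Q}$ is an order-preserving bijection $p$ between finite subsets $\mathrm{dom}(p),\mathrm{ran}(p)$ of $\mathbb{Q}$; $p'\supseteq p$ means $p'$ extends $p$; $\mathrm{Fix}(p)=\{c\in\mathrm{dom}(p):p(c)=c\}$. An open interval $(a,b)$ is $p$-increasing if $a,b\in\mathrm{dom}(p)$, $p(a)=a$, $p(b)=b$ and $p(c)>c$ for all $c\in\mathrm{dom}(p)\cap(a,b)$; $p$-decreasing likewise with $p(c)<c$; $p$-monotone means either. Writing $\mathrm{dom}(p)=\{a_0<\dots<a_n\}$, $p$ is informative if $p(a_0)=a_0$, $p(a_n)=a_n$ and there are indices $0=i_0<\dots<i_r=n$ with $p(a_{i_k})=a_{i_k}$ and each $(a_{i_k},a_{i_{k+1}})$ $p$-monotone; then $\mathrm{Ess}(p)=(\mathrm{dom}(p)\cup\mathrm{ran}(p))\setminus\{a_0,a_n\}$. A pair $(p,q)$ is elementary if $p,q$ are informative, $\min\mathrm{dom}(p)=\min\mathrm{dom}(q)$, $\max\mathrm{dom}(p)=\max\mathrm{dom}(q)$, and $\mathrm{Fix}(p)\cap\mathrm{Fix}(q)$ consists only of this min and max. Words: $F(s,t)$ free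 group, $|w|$ reduced length; for reduced $w=t^{n_k}s^{m_k}\cdots t^{n_1}s^{m_1}$, $w(p,q)(c)=q^{n_k}p^{m_k}\cdots q^{n_1}p^{m_1}(c)$ when defined (rightmost letter acts first); ''$w=t^nv$'' means the product is reduced. Liberation: for an elementary pair $(p,q)$, a triple $(p',q',w)$ with $p'\supseteq p$, $q'\supseteq q$ partial isomorphisms and $w$ reduced liberates $p$ in $(p,q)$ if: (i) $p',q'$ are informative; (ii) $\min\mathrm{dom}(p')=\min\mathrm{dom}(p)$, $\min\mathrm{dom}(q')=\min\mathrm{dom}(q)$, $\max\mathrm{dom}(p')=\max\mathrm{dom}(p)$, $\max\mathrm{dom}(q')=\max\mathrm{dom}(q)$; (iii) $w=t^nv$ with $n\neq0$; (iv) $w(p',q')(c)$ is defined for all $c\in\mathrm{Ess}(p)\cup\mathrm{Ess}(q)$ and $w(p',q')(\min(\mathrm{Ess}(p)\cup\mathrm{Ess}(q)))>\max\mathrm{Ess}(p')$; (v) there is an open interval $J$ whose right endpoint is $\max\mathrm{dom}(q)$, with $w(p',q')(c)\in J$ for all $c\in\mathrm{Ess}(p)\cup\mathrm{Ess}(q)$, and $J$ is $q'$-increasing if $n>0$ and $q'$-decreasing if $n<0$. The triple liberates $q$ in $(p,q)$ if the same holds with the roles of $p,q$ and of $s,t$ interchanged (so $w=s^nv$, $n\ne0$, the bound in (iv) is $>\max\mathrm{Ess}(q')$, and $J$ has right endpoint $\max\mathrm{dom}(p)$ and is $p'$-increasing/decreasing according to the sign of $n$). *)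

(* Defs.v *)
From HB Require Import structures.
From mathcomp Require Import all_boot all_order all_algebra.
Set Implicit Arguments. Unset Strict Implicit. Unset Printing Implicit Defensive.
Import Order.TTheory GRing.Theory Num.Theory.
Local Open Scope ring_scope.

(* A finite partial map Q -> Q, given by its graph. *)
Definition piso := seq (rat * rat).

Definition dom (p : piso) : seq rat := [seq x.1 | x <- p].
Definition ran (p : piso) : seq rat := [seq x.2 | x <- p].

(* p is an order-preserving bijection between dom p and ran p
   (this also forces p to be functional and injective). *)
Definition partial_iso (p : piso) : Prop :=
  forall x y, x \in p -> y \in p -> (x.1 < y.1) = (x.2 < y.2).

Definition extends (p' p : piso) : Prop := {subset p <= p'}.

Definition papp (p : piso) (c : rat) : option rat :=
  ohead [seq x.2 | x <- p & x.1 == c].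
Definition papp_inv (p : piso) (c : rat) : option rat :=
  ohead [seq x.1 | x <- p & x.2 == c].

Definition fixedp (p : piso) (c : rat) : bool := (c, c) \in p.

Definition dmin (p : piso) : rat := head 0 (sort <=%R (dom p)).
Definition dmax (p : piso) : rat := last 0 (sort <=%R (dom p)).

Definition p_increasing (p : piso) (a b : rat) : Prop :=
  fixedp p a /\ fixedp p b /\
  forall x, x \in p -> a < x.1 < b -> x.2 > x.1.
Definition p_decreasing (p : piso) (a b : rat) : Prop :=
  fixedp p a /\ fixedp p b /\
  forall x, x \in p -> a < x.1 < b -> x.2 < x.1.
Definition p_monotone (p : piso) (a b : rat) : Prop :=
  p_increasing p a b \/ p_decreasing p a b.

(* informative: the chosen fixed points a_{i_0} < ... < a_{i_r} are listed in fs *)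
Definition informative (p : piso) : Prop :=
  exists fs : seq rat,
    [/\ fs != [::], sorted <%R fs,
        head 0 fs = dmin p /\ last 0 fs = dmax p,
        all (fixedp p) fs &
        forall k, (k.+1 < size fs)%N -> p_monotone p (nth 0 fs k) (nth 0 fs k.+1)].

Definition ess (p : piso) (c : rat) : bool :=
  [&& ((c \in dom p) || (c \in ran p)), c != dmin p & c != dmax p].

Definition elementary (p q : piso) : Prop :=
  [/\ partial_iso p /\ partial_iso q, informative p /\ informative q,
      dmin p = dmin q, dmax p = dmax q &
      forall c, (fixedp p c && fixedp q c) <-> (c = dmin p \/ c = dmax p)].

(* Words in F(s,t): a letter is (generator, sign); generator false = s,
   true = t; sign true = exponent +1, false = exponent -1.  A word
   [:: l1; ...; lk] denotes the product l1 ... lk. *)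
Definition letter := (bool * bool)%type.
Definition word := seq letter.
Definition linv (l : letter) : letter := (l.1, ~~ l.2).

Definition reduced (w : word) : bool := sorted (fun x y => y != linv x) w.

Definition reduce (w : word) : word :=
  foldr (fun x acc => match acc with
                      | y :: r => if y == linv x then r else x :: acc
                      | [::] => [:: x] end) [::] w.

Definition wlen (w : word) : nat := size (reduce w).

Definition lact (p q : piso) (l : letter) (c : rat) : option rat :=
  match l with
  | (false, true) => papp p c
  | (false, false) => papp_inv p c
  | (true, true) => papp q c
  | (true, false) => papp_inv q c
  end.

(* w(p,q)(c): the rightmost letter acts first *)
Definition weval (p q : piso) (w : word) (c : rat) : option rat :=
  foldr (fun l oc => obind (lact p q l) oc) (Some c) w.

Definition in_open (a b x : rat) : bool := a < x < b.

Definition liberates_p (p q p' q' : piso) (w : word) : Prop :=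
  let E := fun c => ess p c || ess q c in
  [/\ [/\ extends p' p, extends q' q, partial_iso p' & partial_iso q'],
      informative p' /\ informative q',
      [/\ dmin p' = dmin p, dmin q' = dmin q,
                     dmax p' = dmax p & dmax q' = dmax q],
      (* (iii)+(v) : w = t^n v, n <> 0, sign of n = sign of the first letter *)
      (exists e : bool, exists rest : word, w = (true, e) :: rest /\
         exists a : rat,
           (forall c, E c -> exists d, weval p' q' w c = Some d /\
                                       in_open a (dmax q) d) /\
           (if e then p_increasing q' a (dmax q) else p_decreasing q' a (dmax q))) &
      (forall c, E c -> exists d, weval p' q' w c = Some d) /\
      (forall c, E c -> (forall c', E c' -> c <= c') ->
         forall d, weval p' q' w c = Some d ->
         forall z, ess p' z -> z < d)].

Definition liberates_q (p q p' q' : piso) (w : word) : Prop :=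
  let E := fun c => ess p c || ess q c in
  [/\ [/\ extends p' p, extends q' q, partial_iso p' & partial_iso q'],
      informative p' /\ informative q',
      [/\ dmin p' = dmin p, dmin q' = dmin q,
                     dmax p' = dmax p & dmax q' = dmax q],
      (* (iii)+(v) : w = s^n v, n <> 0 *)
      (exists e : bool, exists rest : word, w = (false, e) :: rest /\
         exists a : rat,
           (forall c, E c -> exists d, weval p' q' w c = Some d /\
                                       in_open a (dmax p) d) /\
           (if e then p_increasing p' a (dmax p) else p_decreasing p' a (dmax p))) &
      (forall c, E c -> exists d, weval p' q' w c = Some d) /\
      (forall c, E c -> (forall c', E c' -> c <= c') ->
         forall d, weval p' q' w c = Some d ->
         forall z, ess q' z -> z < d)].

(* Main.v *)
Require Import Defs.
From HB Require Import structures.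
From mathcomp Require Import all_boot all_order all_algebra.
From Stdlib Require Import Classical.
Set Implicit Arguments. Unset Strict Implicit. Unset Printing Implicit Defensive.
Import Order.TTheory GRing.Theory Num.Theory.
Local Open Scope ring_scope.

Lemma avoid_between (Av : seq rat) (a b : rat) :
  a < b -> exists y, a < y < b /\ y \notin Av.
Proof.
elim: Av a b => [|x Av IH] a b ab.
  have [h1 h2] := midf_lt ab; exists ((a + b) / 2); by rewrite h1 h2.
have [y [/andP[ay yb] yAv]] := IH _ _ ab.
case: (eqVneq y x) => [yx|yx].
  have [z [/andP[az zy] zAv]] := IH _ _ ay.
  exists z; rewrite az (lt_trans zy yb) in_cons negb_or zAv andbT; split=> //.
  by rewrite -yx (lt_eqF zy).
by exists y; rewrite ay yb in_cons negb_or yx yAv.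
Qed.

Lemma seq_max (s : seq rat) : s != [::] ->
  exists2 a, a \in s & forall x, x \in s -> x <= a.
Proof.
elim: s => // x s IH _.
case: (eqVneq s [::]) => [->|sn].
  by exists x; rewrite ?mem_head // => y; rewrite inE => /eqP ->.
have [a ain amax] := IH sn.
case: (leP a x) => ax.
  exists x; first exact: mem_head.
  move=> y; rewrite inE => /orP[/eqP->//|/amax]; by move/le_trans; apply.
exists a; first by rewrite inE ain orbT.
move=> y; rewrite inE => /orP[/eqP->|/amax//]; exact: ltW.
Qed.

Lemma seq_min (s : seq rat) : s != [::] ->
  exists2 a, a \in s & forall x, x \in s -> a <= x.
Proof.
elim: s => // x s IH _.
case: (eqVneq s [::]) => [->|sn].
  by exists x; rewrite ?mem_head // => y; rewrite inE => /eqP ->.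
have [a ain amin] := IH sn.
case: (leP x a) => ax.
  exists x; first exact: mem_head.
  move=> y; rewrite inE => /orP[/eqP->//|/amin]; exact: le_trans.
exists a; first by rewrite inE ain orbT.
move=> y; rewrite inE => /orP[/eqP->|/amin//]; exact: ltW.
Qed.

Lemma interp (Lo Up Av : seq rat) :
  (forall l u, l \in Lo -> u \in Up -> l < u) ->
  exists y, [/\ forall l, l \in Lo -> l < y, forall u, u \in Up -> y < u & y \notin Av].
Proof.
move=> H.
suff [a [b [ab Ha Hb]]] : exists a b, [/\ a < b, forall l, l \in Lo -> l <= a &
                                            forall u, u \in Up -> b <= u].
  have [y [/andP[ay yb] yAv]] := avoid_between Av ab.
  exists y; split=> //.
    by move=> l /Ha la; apply: le_lt_trans ay.
  by move=> u /Hb bu; apply: lt_le_trans bu.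
case: (eqVneq Lo [::]) => [->|Ln]; case: (eqVneq Up [::]) => [->|Un].
- by exists 0, 1.
- have [b bin bmin] := seq_min Un.
  exists (b - 1), b; split=> //.
  by rewrite ltrBlDr ltrDl ltr01.
- have [a ain amax] := seq_max Ln.
  exists a, (a + 1); split=> //; by rewrite ltrDl ltr01.
- have [a ain amax] := seq_max Ln.
  have [b bin bmin] := seq_min Un.
  by exists a, b; split=> //; apply: H.
Qed.

Lemma piso_fun p x y1 y2 : partial_iso p -> (x, y1) \in p -> (x, y2) \in p -> y1 = y2.
Proof.
move=> P h1 h2.
have e1 := P _ _ h1 h2; have e2 := P _ _ h2 h1; rewrite /= ltxx in e1 e2.
apply/eqP; rewrite eq_le !leNgt -e1 -e2 //.
Qed.

Lemma piso_inj p x1 x2 y : partial_iso p -> (x1, y) \in p -> (x2, y) \in p -> x1 = x2.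
Proof.
move=> P h1 h2.
have e1 := P _ _ h1 h2; have e2 := P _ _ h2 h1; rewrite /= ltxx in e1 e2.
apply/eqP; rewrite eq_le !leNgt e1 e2 //.
Qed.

Lemma piso_le p z w : partial_iso p -> z \in p -> w \in p -> (z.1 <= w.1) = (z.2 <= w.2).
Proof. by move=> P hz hw; rewrite !leNgt (P _ _ hw hz). Qed.

Lemma papp_mem p x y : papp p x = Some y -> (x, y) \in p.
Proof.
rewrite /papp; elim: p => //= [[a b] p IH] /=.
case: ifP => /= [/eqP ->|_]; first by case=> ->; exact: mem_head.
by move/IH => h; rewrite inE h orbT.
Qed.

Lemma papp_None p x : papp p x = None -> forall z, z \in p -> z.1 != x.
Proof.
rewrite /papp; elim: p => //= [[a b] p IH] /=.
case: ifP => //= ax h z; rewrite inE => /orP[/eqP->|]; first by rewrite ax.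
exact: IH.
Qed.

Lemma mem_papp p x y : partial_iso p -> (x, y) \in p -> papp p x = Some y.
Proof.
move=> P h; case E: (papp p x) => [y'|].
  by rewrite (piso_fun P h (papp_mem E)).
by have := papp_None E h; rewrite eqxx.
Qed.

Definition swapp (p : piso) : piso := [seq (z.2, z.1) | z <- p].

Lemma mem_swapp z p : (z \in swapp p) = ((z.2, z.1) \in p).
Proof.
case: z => a b /=; apply/mapP/idP => [[[c d] cp [-> ->]]//|h].
by exists (b, a).
Qed.

Lemma swappK p : swapp (swapp p) = p.
Proof. by elim: p => //= [[a b] p ->]. Qed.

Lemma papp_inv_swapp p c : papp_inv p c = papp (swapp p) c.
Proof.
rewrite /papp_inv /papp; elim: p => //= [[a b] p IH] /=.
by case: ifP => //= _; rewrite IH.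
Qed.

Lemma swapp_piso p : partial_iso p -> partial_iso (swapp p).
Proof.
move=> P x y; rewrite !mem_swapp => hx hy; by rewrite (P _ _ hx hy).
Qed.

Lemma swapp_sub p p' : {subset p <= p'} -> {subset swapp p <= swapp p'}.
Proof. by move=> h z; rewrite !mem_swapp; apply: h. Qed.

Definition orient (l : letter) (P Q : piso) : piso :=
  if l.1 then (if l.2 then Q else swapp Q) else (if l.2 then P else swapp P).

Lemma lact_orient P Q l c : lact P Q l c = papp (orient l P Q) c.
Proof. by case: l => [[] []] //=; rewrite papp_inv_swapp. Qed.

Lemma orient_piso l P Q : partial_iso P -> partial_iso Q -> partial_iso (orient l P Q).
Proof. by case: l => [[] []] /= hP hQ //; apply: swapp_piso. Qed.

Lemma orient_sub l P Q P' Q' : {subset P <= P'} -> {subset Q <= Q'} ->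
  {subset orient l P Q <= orient l P' Q'}.
Proof. by case: l => [[] []] /= hP hQ //; apply: swapp_sub. Qed.

Definition newpair (l : letter) (s y : rat) : rat * rat := if l.2 then (s, y) else (y, s).
Definition addP (l : letter) (P : piso) (s y : rat) : piso := if l.1 then P else newpair l s y :: P.
Definition addQ (l : letter) (Q : piso) (s y : rat) : piso := if l.1 then newpair l s y :: Q else Q.

Lemma orient_add l P Q s y : orient l (addP l P s y) (addQ l Q s y) = (s, y) :: orient l P Q.
Proof. by case: l => [[] []]. Qed.

Lemma sub_addP l P s y : {subset P <= addP l P s y}.
Proof. by case: l => [[] b] z //= h; rewrite inE h orbT. Qed.
Lemma sub_addQ l Q s y : {subset Q <= addQ l Q s y}.
Proof. by case: l => [[] b] z //= h; rewrite inE h orbT. Qed.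

Lemma weval_cons P Q l w c : weval P Q (l :: w) c = obind (lact P Q l) (weval P Q w c).
Proof. by []. Qed.

Lemma weval_ext P Q P' Q' w c d : partial_iso P' -> partial_iso Q' ->
  {subset P <= P'} -> {subset Q <= Q'} -> weval P Q w c = Some d -> weval P' Q' w c = Some d.
Proof.
move=> hP hQ sP sQ; elim: w d => //= l w IH d.
case E: (weval P Q w c) => [x|] //=; rewrite (IH _ E) /= !lact_orient => h.
apply: mem_papp; first exact: orient_piso.
exact: (orient_sub (l:=l) sP sQ (papp_mem h)).
Qed.

Definition STR (phi : piso) (fs : seq rat) (dir : nat -> bool) : Prop :=
  [/\ partial_iso phi, sorted <%R fs /\ fs != [::], all (fun c => (c, c) \in phi) fs,
      (forall z, z \in phi -> head 0 fs <= z.1 <= last 0 fs) &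
      (forall k z, (k.+1 < size fs)%N -> z \in phi -> nth 0 fs k < z.1 < nth 0 fs k.+1 ->
         if dir k then z.1 < z.2 else z.2 < z.1)].

Section Sorted.
Variable fs : seq rat.
Hypothesis sfs : sorted <%R fs.

Lemma nth_lt i j : (i < size fs)%N -> (j < size fs)%N -> (nth 0 fs i < nth 0 fs j) = (i < j)%N.
Proof. by move=> hi hj; apply: (lt_sorted_ltn_nth 0 sfs). Qed.

Lemma nth_le i j : (i < size fs)%N -> (j < size fs)%N -> (nth 0 fs i <= nth 0 fs j) = (i <= j)%N.
Proof.
move=> hi hj; case: (eqVneq i j) => [->|ij]; first by rewrite lexx leqnn.
rewrite le_eqVlt nth_lt // [(i <= j)%N]leq_eqVlt (negbTE ij) /=.
suff -> : (nth 0 fs i == nth 0 fs j) = false by [].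
apply/negbTE; move: ij; apply: contra => /eqP e.
have a := nth_lt hi hj; have b := nth_lt hj hi; rewrite e ltxx in a b.
by rewrite eqn_leq leqNgt -b /= leqNgt -a.
Qed.

Lemma head_nth : fs != [::] -> head 0 fs = nth 0 fs 0.
Proof. by case: fs. Qed.

Lemma last_nth : fs != [::] -> last 0 fs = nth 0 fs (size fs).-1.
Proof. by case: fs => // a s _; rewrite (last_nth 0) /=. Qed.

Lemma head_le_nth i : (i < size fs)%N -> head 0 fs <= nth 0 fs i.
Proof.
move=> hi; have ne : fs != [::] by case: fs hi.
by rewrite head_nth // nth_le // (leq_ltn_trans _ hi).
Qed.

Lemma nth_le_last i : (i < size fs)%N -> nth 0 fs i <= last 0 fs.
Proof.
move=> hi; have ne : fs != [::] by case: fs hi.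
have hs : ((size fs).-1 < size fs)%N by case: (size fs) hi.
by rewrite last_nth // nth_le // -ltnS prednK // (leq_ltn_trans _ hi).
Qed.

Lemma fs_ivl s : head 0 fs < s -> s < last 0 fs -> s \notin fs ->
  exists k, (k.+1 < size fs)%N /\ nth 0 fs k < s < nth 0 fs k.+1.
Proof.
move: sfs; elim: fs => [_ hs sl|a t IH st /= hs]; first by move: (lt_trans hs sl); rewrite /= ltxx.
case: t st IH => [|b t] st IH sl; first by move: (lt_trans hs sl); rewrite /= ltxx.
rewrite inE negb_or => /andP[sa sn].
case: (ltgtP s b) => sb.
- by exists 0%N; rewrite /= hs sb.
- have st' : sorted <%R (b :: t) by case/andP: st.
  have [k [hk hk2]] := IH st' sb sl sn.
  by exists k.+1.
- by move: sn; rewrite sb inE eqxx.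
Qed.

Lemma fs_ivl_uniq s k j : (k.+1 < size fs)%N -> (j.+1 < size fs)%N ->
  nth 0 fs k < s < nth 0 fs k.+1 -> nth 0 fs j < s < nth 0 fs j.+1 -> k = j.
Proof.
move=> hk hj /andP[a1 a2] /andP[b1 b2].
have hk' : (k < size fs)%N by apply: ltnW.
have hj' : (j < size fs)%N by apply: ltnW.
apply/eqP; rewrite eqn_leq; apply/andP; split.
  rewrite -ltnS -(nth_lt hk' hj); exact: lt_trans a1 b2.
rewrite -ltnS -(nth_lt hj' hk); exact: lt_trans b1 a2.
Qed.

Lemma mem_nth_fs k : (k < size fs)%N -> nth 0 fs k \in fs.
Proof. by move=> h; apply: mem_nth. Qed.

End Sorted.

Section STRprops.
Variables (phi : piso) (fs : seq rat) (dir : nat -> bool).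
Hypothesis S : STR phi fs dir.

Lemma STR_piso : partial_iso phi. Proof. by case: S. Qed.
Lemma STR_sorted : sorted <%R fs. Proof. by case: S => _ []. Qed.
Lemma STR_ne : fs != [::]. Proof. by case: S => _ []. Qed.

Lemma STR_fix c : c \in fs -> (c, c) \in phi.
Proof. by case: S => _ _ /allP h _ _; apply: h. Qed.

Lemma STR_nthfix k : (k < size fs)%N -> (nth 0 fs k, nth 0 fs k) \in phi.
Proof. by move=> h; apply: STR_fix; apply: mem_nth. Qed.

Lemma STR_dom z : z \in phi -> head 0 fs <= z.1 <= last 0 fs.
Proof. by case: S => _ _ _ h _; apply: h. Qed.

Lemma STR_headfix : (head 0 fs, head 0 fs) \in phi.
Proof. by apply: STR_fix; case: fs STR_ne => //= a s _; rewrite mem_head. Qed.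

Lemma STR_lastfix : (last 0 fs, last 0 fs) \in phi.
Proof. by apply: STR_fix; case: fs STR_ne => //= a s _; rewrite mem_last. Qed.

Lemma STR_ran z : z \in phi -> head 0 fs <= z.2 <= last 0 fs.
Proof.
move=> hz; have /andP[h1 h2] := STR_dom hz.
have e1 := piso_le STR_piso STR_headfix hz.
have e2 := piso_le STR_piso hz STR_lastfix.
by rewrite /= in e1 e2; rewrite -e1 -e2 h1 h2.
Qed.

Lemma STR_fixed_eq z : z \in phi -> z.1 \in fs -> z.2 = z.1.
Proof.
case: z => a b hz ha; have := STR_fix ha => h.
by rewrite /= (piso_fun STR_piso hz h).
Qed.

Lemma STR_fixed_eq2 z : z \in phi -> z.2 \in fs -> z.1 = z.2.
Proof.
case: z => a b hz hb; have := STR_fix hb => h.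
by rewrite /= (piso_inj STR_piso hz h).
Qed.

Lemma STR_same_ivl k z : (k.+1 < size fs)%N -> z \in phi ->
  nth 0 fs k < z.1 < nth 0 fs k.+1 -> nth 0 fs k < z.2 < nth 0 fs k.+1.
Proof.
move=> hk hz /andP[h1 h2].
have f1 := STR_nthfix (ltnW hk); have f2 := STR_nthfix hk.
have e1 := STR_piso f1 hz; have e2 := STR_piso hz f2.
by rewrite /= in e1 e2; rewrite -e1 -e2 h1 h2.
Qed.

Lemma STR_dirv k z : (k.+1 < size fs)%N -> z \in phi -> nth 0 fs k < z.1 < nth 0 fs k.+1 ->
  if dir k then z.1 < z.2 else z.2 < z.1.
Proof. by case: S => _ _ _ _ h; apply: h. Qed.

Lemma STR_up k x T : (k.+1 < size fs)%N -> nth 0 fs k < x -> x <= T -> T < nth 0 fs k.+1 -> dir k ->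
  (forall z, z \in phi -> x < z.1 -> z.1 <= T -> T < z.2) ->
  forall z, z \in phi -> x < z.1 -> T < z.2.
Proof.
move=> hk ax xT Tb dk H z hz xz.
case: (leP z.1 T) => [zT|Tz]; first exact: H.
have fb := STR_nthfix hk.
case: (ltgtP z.1 (nth 0 fs k.+1)) => zb.
- have := STR_dirv hk hz; rewrite dk (lt_trans ax xz) zb => /(_ isT) h.
  exact: lt_trans Tz h.
- have e := STR_piso fb hz; rewrite /= zb in e.
  exact: lt_trans Tb (esym e).
- case: z hz xz Tz zb => a b hz /= _ _ ab; rewrite ab in hz.
  by rewrite (piso_fun STR_piso hz fb).
Qed.

Lemma STR_down k x : (k.+1 < size fs)%N -> nth 0 fs k < x -> x < nth 0 fs k.+1 -> dir k = false ->
  forall z, z \in phi -> z.1 < x -> z.2 < x.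
Proof.
move=> hk ax xb dk z hz zx.
have fa := STR_nthfix (ltnW hk).
case: (ltgtP z.1 (nth 0 fs k)) => za.
- have e := STR_piso hz fa; rewrite /= za in e.
  exact: lt_trans (esym e) ax.
- have := STR_dirv hk hz; rewrite dk za (lt_trans zx xb) => /(_ isT) h.
  exact: lt_trans h zx.
- case: z hz zx za => a b hz /= _ ab; rewrite ab in hz.
  by rewrite (piso_fun STR_piso hz fa).
Qed.

End STRprops.

Lemma STR_swap phi fs dir : STR phi fs dir -> STR (swapp phi) fs (fun k => ~~ dir k).
Proof.
move=> S; split.
- exact: swapp_piso (STR_piso S).
- by split; [exact: STR_sorted S|exact: STR_ne S].
- by apply/allP => c hc; rewrite mem_swapp /=; exact (STR_fix S hc).
- by move=> z; rewrite mem_swapp => hz; have := STR_ran S hz.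
- move=> k z hk; rewrite mem_swapp => hz hin.
  have f1 := STR_nthfix S (ltnW hk); have f2 := STR_nthfix S hk.
  have e1 := STR_piso S f1 hz; have e2 := STR_piso S hz f2; rewrite /= in e1 e2.
  have hin2 : nth 0 fs k < z.2 < nth 0 fs k.+1 by rewrite e1 e2.
  have := STR_dirv S hk hz; rewrite /= => /(_ hin2); by case: (dir k).
Qed.

Lemma STR_ext phi fs dir s y k : STR phi fs dir -> (k.+1 < size fs)%N ->
  nth 0 fs k < s < nth 0 fs k.+1 ->
  (forall z, z \in phi -> z.1 != s) ->
  (forall z, z \in phi -> z.1 < s -> z.2 < y) ->
  (forall z, z \in phi -> s < z.1 -> y < z.2) ->
  (if dir k then s < y else y < s) -> STR ((s, y) :: phi) fs dir.
Proof.
move=> S hk hs ns Hlo Hup hd.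
have P := STR_piso S.
have key : forall z, z \in phi -> (s < z.1) = (y < z.2) /\ (z.1 < s) = (z.2 < y).
  move=> z hz; case: (ltgtP s z.1) => sz.
  - by have := Hup _ hz sz => h; rewrite h (lt_gtF h).
  - by have := Hlo _ hz sz => h; rewrite h (lt_gtF h).
  - by have := ns _ hz; rewrite sz eqxx.
split.
- move=> a b; rewrite !inE => /orP[/eqP->|ha] /orP[/eqP->|hb] //=.
  + by rewrite !ltxx.
  + by case: (key _ hb).
  + by case: (key _ ha).
  + exact: P.
- by split; [exact: STR_sorted S|exact: STR_ne S].
- by apply/allP => c hc; rewrite inE (STR_fix S hc) orbT.
- move=> z; rewrite inE => /orP[/eqP->|hz] /=; last exact (STR_dom S hz).
  case/andP: hs => h1 h2; apply/andP; split.
    have hh := head_le_nth (STR_sorted S) (ltnW hk); exact: le_trans hh (ltW h1).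
  have hh := nth_le_last (STR_sorted S) hk; exact: le_trans (ltW h2) hh.
- move=> j z hj; rewrite inE => /orP[/eqP->|hz] /= hin; last exact (STR_dirv S hj hz hin).
  by rewrite -(fs_ivl_uniq (STR_sorted S) hk hj hs hin).
Qed.

Lemma valid_exists phi fs dir s k (eLo eUp Av : seq rat) :
  STR phi fs dir -> (k.+1 < size fs)%N -> nth 0 fs k < s < nth 0 fs k.+1 ->
  (forall l, l \in eLo -> (forall z, z \in phi -> s < z.1 -> l < z.2) /\ (~~ dir k -> l < s)) ->
  (forall u, u \in eUp -> (forall z, z \in phi -> z.1 < s -> z.2 < u) /\ (dir k -> s < u)) ->
  (forall l u, l \in eLo -> u \in eUp -> l < u) ->
  exists y, [/\ forall z, z \in phi -> z.1 < s -> z.2 < y,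
                forall z, z \in phi -> s < z.1 -> y < z.2,
                (if dir k then s < y else y < s),
                (forall l, l \in eLo -> l < y) /\ (forall u, u \in eUp -> y < u) & y \notin Av].
Proof.
move=> S hk hs HL HU HLU.
have P := STR_piso S.
case/andP: hs => hs1 hs2.
set Lo := [seq z.2 | z <- phi & z.1 < s] ++ (if dir k then [:: s] else [::]) ++ eLo.
set Up := [seq z.2 | z <- phi & s < z.1] ++ (if dir k then [::] else [:: s]) ++ eUp.
have upl : dir k -> forall z, z \in phi -> s < z.1 -> s < z.2.
  move=> dk; apply: (STR_up S hk hs1 (lexx s) hs2 dk).
  by move=> z _ a b; move: (lt_le_trans a b); rewrite ltxx.
have downl : dir k = false -> forall z, z \in phi -> z.1 < s -> z.2 < s.
  by move=> dk; apply: (STR_down S hk hs1 hs2 dk).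
have [y [yL yU yA]] : exists y, [/\ forall l, l \in Lo -> l < y, forall u, u \in Up -> y < u & y \notin Av].
  apply: interp => l u; rewrite !mem_cat => hl hu.
  case/orP: hl => [/mapP[z]|hl].
    rewrite mem_filter => /andP[zs hz] ->.
    case/orP: hu => [/mapP[w]|hu].
      rewrite mem_filter => /andP[sw hw] ->.
      by have := P _ _ hz hw; rewrite (lt_trans zs sw) => <-.
    case/orP: hu => [|hu]; last by case: (HU _ hu) => h _; apply: h.
    by case E: (dir k) => //; rewrite inE => /eqP ->; apply: downl.
  case/orP: hl => [|hl].
    case E: (dir k) => //; rewrite inE => /eqP ->.
    case/orP: hu => [/mapP[w]|hu].
      by rewrite mem_filter => /andP[sw hw] ->; apply: upl.
    case/orP: hu => [|hu]; first by rewrite E in_nil.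
    by case: (HU _ hu) => _ h; apply: h; rewrite E.
  case/orP: hu => [/mapP[w]|hu].
    by rewrite mem_filter => /andP[sw hw] ->; case: (HL _ hl) => h _; apply: h.
  case/orP: hu => [|hu]; last exact: HLU.
  by case E: (dir k) => //; rewrite inE => /eqP ->; case: (HL _ hl) => _ h; apply: h; rewrite E.
exists y; split.
- move=> z hz zs; apply: yL; rewrite mem_cat; apply/orP; left.
  by apply/mapP; exists z => //; rewrite mem_filter zs hz.
- move=> z hz zs; apply: yU; rewrite mem_cat; apply/orP; left.
  by apply/mapP; exists z => //; rewrite mem_filter zs hz.
- case E: (dir k).
    by apply: yL; rewrite !mem_cat E inE eqxx orbT.
  by apply: yU; rewrite !mem_cat E inE eqxx orbT.
- by split=> [l hl|u hu]; [apply: yL|apply: yU]; rewrite !mem_cat ?hl ?hu !orbT.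
- exact: yA.
Qed.

Lemma sorted_head_le (s : seq rat) x : sorted <=%R s -> x \in s -> head 0 s <= x.
Proof.
case: s => // a t /= st; rewrite inE => /orP[/eqP->//|xt].
have := order_path_min (@le_trans _ rat) st => /allP; by apply.
Qed.

Lemma sorted_le_last (s : seq rat) x : sorted <=%R s -> x \in s -> x <= last 0 s.
Proof.
case: s => // a t /=; elim: t a x => [|b t IH] a x /=.
  by move=> _; rewrite inE => /eqP->.
case/andP=> ab st; rewrite inE => /orP[/eqP->|xt].
  apply: (le_trans ab); exact: IH _ _ st (mem_head _ _).
exact: IH _ _ st xt.
Qed.

Lemma dmin_le p z : z \in p -> dmin p <= z.1.
Proof.
move=> hz; rewrite /dmin; apply: sorted_head_le; first exact: sort_le_sorted.
by rewrite mem_sort; apply/mapP; exists z.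
Qed.

Lemma dmax_ge p z : z \in p -> z.1 <= dmax p.
Proof.
move=> hz; rewrite /dmax; apply: sorted_le_last; first exact: sort_le_sorted.
by rewrite mem_sort; apply/mapP; exists z.
Qed.

Lemma dmin_mem p : p != [::] -> dmin p \in dom p.
Proof.
move=> ne; rewrite /dmin -(mem_sort <=%R (dom p)).
case E: (sort _ _) => [|a t]; last by rewrite mem_head.
by move/(congr1 size): E; rewrite size_sort size_map /= => /eqP; rewrite size_eq0 (negbTE ne).
Qed.

Lemma dmax_mem p : p != [::] -> dmax p \in dom p.
Proof.
move=> ne; rewrite /dmax -(mem_sort <=%R (dom p)).
case E: (sort _ _) => [|a t]; last by rewrite /= mem_last.
by move/(congr1 size): E; rewrite size_sort size_map /= => /eqP; rewrite size_eq0 (negbTE ne).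
Qed.

Lemma dmin_eq p a : (a, a) \in p -> (forall z, z \in p -> a <= z.1) -> dmin p = a.
Proof.
move=> ha H; have ne : p != [::] by case: p ha H.
have /mapP[z hz e] := dmin_mem ne.
apply/eqP; rewrite eq_le; have := dmin_le ha; rewrite /= => ->; by rewrite e H.
Qed.

Lemma dmax_eq p a : (a, a) \in p -> (forall z, z \in p -> z.1 <= a) -> dmax p = a.
Proof.
move=> ha H; have ne : p != [::] by case: p ha H.
have /mapP[z hz e] := dmax_mem ne.
apply/eqP; rewrite eq_le; have := dmax_ge ha; rewrite /= => ->; by rewrite e H.
Qed.

Lemma STR_dmin phi fs dir : STR phi fs dir -> dmin phi = head 0 fs.
Proof.
move=> S; apply: dmin_eq; first exact: STR_headfix S.
by move=> z hz; case/andP: (STR_dom S hz).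
Qed.

Lemma STR_dmax phi fs dir : STR phi fs dir -> dmax phi = last 0 fs.
Proof.
move=> S; apply: dmax_eq; first exact: STR_lastfix S.
by move=> z hz; case/andP: (STR_dom S hz).
Qed.

Lemma STR_informative phi fs dir : STR phi fs dir -> informative phi.
Proof.
move=> S; exists fs; split.
- exact: STR_ne S.
- exact: STR_sorted S.
- by rewrite (STR_dmin S) (STR_dmax S).
- by apply/allP => c hc; rewrite /fixedp; exact (STR_fix S hc).
- move=> k hk; rewrite /p_monotone /p_increasing /p_decreasing /fixedp.
  have f1 := STR_nthfix S (ltnW hk); have f2 := STR_nthfix S hk.
  case E: (dir k); [left|right]; (split; [done|split; [done|]]) => x hx hin;
    have := STR_dirv S hk hx hin; by rewrite E.
Qed.

Definition incb (p : piso) (a b : rat) : bool := all (fun x => (a < x.1 < b) ==> (x.1 < x.2)) p.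

Lemma informative_STR p : partial_iso p -> informative p ->
  exists fs dir, [/\ STR p fs dir, head 0 fs = dmin p & last 0 fs = dmax p].
Proof.
move=> P [fs [ne st [hh hl] fx mono]].
exists fs, (fun k => incb p (nth 0 fs k) (nth 0 fs k.+1)); split=> //.
split=> //.
- move=> z hz; rewrite hh hl dmin_le ?dmax_ge //.
- move=> k z hk hz hin; case E: (incb _ _ _).
    by move/allP: E => /(_ z hz); rewrite hin.
  case: (mono k hk) => [[_ [_ h]]|[_ [_ h]]]; last exact: h.
  move: E; suff -> : incb p (nth 0 fs k) (nth 0 fs k.+1) by [].
  by apply/allP => x hx; apply/implyP => hx2; apply: h.
Qed.

Lemma elem_STR p q : elementary p q ->
  exists fsP dirP fsQ dirQ,
    [/\ STR p fsP dirP, STR q fsQ dirQ,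
        head 0 fsP = dmin p /\ last 0 fsP = dmax p,
        head 0 fsQ = dmin p /\ last 0 fsQ = dmax p &
        forall c, c \in fsP -> c \in fsQ -> c = dmin p \/ c = dmax p].
Proof.
case=> [[Pp Pq] [Ip Iq] emin emax fixc].
have [fsP [dirP [SP hP lP]]] := informative_STR Pp Ip.
have [fsQ [dirQ [SQ hQ lQ]]] := informative_STR Pq Iq.
exists fsP, dirP, fsQ, dirQ; split=> //.
  by rewrite hQ lQ emin emax.
move=> c cP cQ; apply/fixc; rewrite /fixedp.
by rewrite (STR_fix SP cP) (STR_fix SQ cQ).
Qed.

Lemma STR_dext phi fs d1 d2 : (forall k, d1 k = d2 k) -> STR phi fs d1 -> STR phi fs d2.
Proof.
move=> e [h1 h2 h3 h4 h5]; split=> // k z hk hz hin; rewrite -e; exact: h5.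
Qed.

Lemma papp_head s y (phi : piso) : papp ((s, y) :: phi) s = Some y.
Proof. by rewrite /papp /= eqxx. Qed.

Section Good.
Variables (p q : piso) (fsP fsQ : seq rat) (dirP dirQ : nat -> bool) (m M : rat).
Hypothesis hP : head 0 fsP = m.
Hypothesis lP : last 0 fsP = M.
Hypothesis hQ : head 0 fsQ = m.
Hypothesis lQ : last 0 fsQ = M.

Definition fsl (l : letter) := if l.1 then fsQ else fsP.
Definition dirl (l : letter) k :=
  if l.1 then (if l.2 then dirQ k else ~~ dirQ k) else (if l.2 then dirP k else ~~ dirP k).

Definition GOOD (P Q : piso) :=
  [/\ STR P fsP dirP, STR Q fsQ dirQ, {subset p <= P} & {subset q <= Q}].

Lemma GOOD_P P Q : GOOD P Q -> partial_iso P. Proof. by case=> S _ _ _; exact: STR_piso S. Qed.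
Lemma GOOD_Q P Q : GOOD P Q -> partial_iso Q. Proof. by case=> _ S _ _; exact: STR_piso S. Qed.

Lemma head_l l : head 0 (fsl l) = m. Proof. by rewrite /fsl; case: l.1. Qed.
Lemma last_l l : last 0 (fsl l) = M. Proof. by rewrite /fsl; case: l.1. Qed.

Lemma GOOD_orient l P Q : GOOD P Q -> STR (orient l P Q) (fsl l) (dirl l).
Proof.
case=> SP SQ _ _; case: l => [[] []]; rewrite /orient /fsl /dirl /= //;
  by apply: STR_swap.
Qed.

Lemma GOOD_orient_piso l P Q : GOOD P Q -> partial_iso (orient l P Q).
Proof. by move/(GOOD_orient l)/STR_piso. Qed.

Lemma GOOD_add l P Q s y : GOOD P Q -> STR ((s, y) :: orient l P Q) (fsl l) (dirl l) ->
  GOOD (addP l P s y) (addQ l Q s y).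
Proof.
case=> SP SQ sp sq; case: l => [[] []]; rewrite /orient /fsl /dirl /addP /addQ /newpair /= => S.
- split=> // z /sq h; by rewrite inE h orbT.
- split=> //; last by move=> z /sq h; rewrite inE h orbT.
  have := STR_swap S; rewrite /= swappK; apply: STR_dext => k; exact: negbK.
- split=> // z /sp h; by rewrite inE h orbT.
- split=> //; last by move=> z /sp h; rewrite inE h orbT.
  have := STR_swap S; rewrite /= swappK; apply: STR_dext => k; exact: negbK.
Qed.

Lemma sub_refl (P : piso) : {subset P <= P}. Proof. by []. Qed.
Lemma sub_trans (A B C : piso) : {subset A <= B} -> {subset B <= C} -> {subset A <= C}.
Proof. by move=> h1 h2 z /h1/h2. Qed.

Lemma in_range phi fs dir z : STR phi fs dir -> head 0 fs = m -> last 0 fs = M ->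
  z \in phi -> m < z.1 < M -> m < z.2 < M.
Proof.
move=> S hh hl hz /andP[h1 h2].
have f1 := STR_headfix S; have f2 := STR_lastfix S; rewrite hh hl in f1 f2.
have e1 := STR_piso S f1 hz; have e2 := STR_piso S hz f2; rewrite /= in e1 e2.
by rewrite -e1 -e2 h1 h2.
Qed.

Lemma not_fixed phi fs dir s : STR phi fs dir -> papp phi s = None -> s \notin fs.
Proof.
move=> S E; apply/negP => hs; have := papp_None E (STR_fix S hs); by rewrite eqxx.
Qed.

Lemma step_new l P Q s k (eLo eUp Av : seq rat) :
  GOOD P Q -> (k.+1 < size (fsl l))%N -> nth 0 (fsl l) k < s < nth 0 (fsl l) k.+1 ->
  papp (orient l P Q) s = None ->
  (forall x, x \in eLo -> (forall z, z \in orient l P Q -> s < z.1 -> x < z.2) /\ (~~ dirl l k -> x < s)) ->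
  (forall u, u \in eUp -> (forall z, z \in orient l P Q -> z.1 < s -> z.2 < u) /\ (dirl l k -> s < u)) ->
  (forall x u, x \in eLo -> u \in eUp -> x < u) ->
  exists y, [/\ GOOD (addP l P s y) (addQ l Q s y),
     lact (addP l P s y) (addQ l Q s y) l s = Some y,
     (if dirl l k then s < y else y < s),
     (forall x, x \in eLo -> x < y) /\ (forall u, u \in eUp -> y < u) & y \notin Av].
Proof.
move=> G hk hs E HL HU HLU.
have S := GOOD_orient l G.
have [y [y1 y2 y3 [y4 y5] y6]] := valid_exists Av S hk hs HL HU HLU.
exists y; split=> //.
- apply: GOOD_add => //; apply: STR_ext S hk hs _ y1 y2 y3.
  by move=> z hz; apply: papp_None E z hz.
- by rewrite lact_orient orient_add papp_head.
Qed.

Lemma step_any l P Q s : GOOD P Q -> m < s < M ->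
  exists P' Q' y, [/\ GOOD P' Q', {subset P <= P'} /\ {subset Q <= Q'},
                      lact P' Q' l s = Some y & m < y < M].
Proof.
move=> G hs; have S := GOOD_orient l G.
case E: (papp (orient l P Q) s) => [y|].
  exists P, Q, y; split; [done|by split|by rewrite lact_orient|].
  exact (in_range S (head_l l) (last_l l) (papp_mem E) hs).
have nf := not_fixed S E.
case/andP: hs => hs1 hs2.
have a1 : head 0 (fsl l) < s by rewrite head_l.
have a2 : s < last 0 (fsl l) by rewrite last_l.
have [k [hk hin]] := fs_ivl (STR_sorted S) a1 a2 nf.
have [y [G' ly _ _ _]] := step_new (eLo:=[::]) (eUp:=[::]) [::] G hk hin E
   (fun x (h : x \in [::]) => False_ind _ (notF h))
   (fun x (h : x \in [::]) => False_ind _ (notF h))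
   (fun x u (h : x \in [::]) _ => False_ind _ (notF h)).
exists (addP l P s y), (addQ l Q s y), y; split=> //.
  by split; [apply: sub_addP|apply: sub_addQ].
have S' := GOOD_orient l G'; rewrite orient_add in S'.
apply: (in_range S' (head_l l) (last_l l) (mem_head _ _)); by rewrite /= hs1 hs2.
Qed.

Lemma path_any P Q c w : GOOD P Q -> m < c < M ->
  exists P' Q' d, [/\ GOOD P' Q', {subset P <= P'} /\ {subset Q <= Q'},
                      weval P' Q' w c = Some d & m < d < M].
Proof.
move=> G hc; elim: w => [|l w [P1 [Q1 [x [G1 [s1 s2] e1 hx]]]]].
  by exists P, Q, c; split=> //; split.
have [P2 [Q2 [y [G2 [t1 t2] e2 hy]]]] := step_any l G1 hx.
exists P2, Q2, y; split=> //.
  by split; apply: sub_trans; eassumption.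
rewrite weval_cons (weval_ext (GOOD_P G2) (GOOD_Q G2) t1 t2 e1) /=.
exact: e2.
Qed.

End Good.

Lemma count_lt_ex (T : eqType) (a b : pred T) (s : seq T) :
  (forall z, a z -> b z) -> (exists2 z, z \in s & b z && ~~ a z) -> (count a s < count b s)%N.
Proof.
move=> ab [z zs zab]; elim: s zs => // w s IH; rewrite inE => /orP[/eqP<-|zs] /=.
  case/andP: zab => -> /negbTE ->; rewrite add0n add1n ltnS; exact: sub_count.
rewrite -addnS; apply: leq_add; last exact: IH.
by case E: (a w) => //; rewrite (ab _ E).
Qed.

Lemma orient_mem l P Q z : z \in orient l P Q -> z \in P ++ Q \/ (z.2, z.1) \in P ++ Q.
Proof.
case: l => [[] []]; rewrite /orient /= ?mem_swapp => h; [left|right|left|right];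
  by rewrite mem_cat h ?orbT.
Qed.

Definition ivl (fs : seq rat) (x : rat) (k : nat) : bool :=
  (k.+1 < size fs)%N && (nth 0 fs k < x < nth 0 fs k.+1).

Lemma ivl_notin fs x k : sorted <%R fs -> ivl fs x k -> x \notin fs.
Proof.
move=> st /andP[hk /andP[h1 h2]]; apply/negP => /(nthP 0)[j hj ej].
have hk' : (k < size fs)%N by apply: ltnW.
rewrite -ej (nth_lt st hk' hj) in h1; rewrite -ej (nth_lt st hj hk) in h2.
by move: h2; rewrite ltnS leqNgt h1.
Qed.

Lemma mu_lt a b (c d : bool) : (a < b)%N -> (a.*2 + c < b.*2 + d)%N.
Proof.
move=> h; apply: (@leq_trans (a.+1).*2).
  by rewrite doubleS -addn2 ltn_add2l; case: c.
by apply: leq_trans (leq_addr _ _); rewrite leq_double.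
Qed.

Lemma mu_le a b : (a <= b)%N -> (a.*2 + false < b.*2 + true)%N.
Proof. by move=> h; rewrite addn0 addn1 ltnS leq_double. Qed.

Lemma HT_triv (phi : piso) (x : rat) : forall z, z \in phi -> x < z.1 -> z.1 <= x -> x < z.2.
Proof. by move=> z _ a b; move: (lt_le_trans a b); rewrite ltxx. Qed.

Section PhaseB.
Variables (p q : piso) (fsP fsQ : seq rat) (dirP dirQ : nat -> bool) (m M : rat).
Hypothesis hP : head 0 fsP = m.
Hypothesis lP : last 0 fsP = M.
Hypothesis hQ : head 0 fsQ = m.
Hypothesis lQ : last 0 fsQ = M.
Hypothesis Hfix : forall c, c \in fsP -> c \in fsQ -> c = m \/ c = M.

Local Notation G := (GOOD p q fsP fsQ dirP dirQ).
Local Notation FS := (fsl fsP fsQ).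
Local Notation DL := (dirl dirP dirQ).

Definition fsg (g : bool) := if g then fsQ else fsP.
Definition dirg (g : bool) k := if g then dirQ k else dirP k.
Definition ltr (g : bool) k : letter := (g, dirg g k).

Lemma fsl_ltr g k : FS (ltr g k) = fsg g. Proof. by []. Qed.
Lemma dirl_ltr g k : DL (ltr g k) k = true.
Proof. by rewrite /dirl /ltr /dirg /=; case: g; case: (_ k). Qed.

Lemma fsg_sorted g P Q : G P Q -> sorted <%R (fsg g).
Proof. by case=> SP SQ _ _; case: g; [exact: STR_sorted SQ|exact: STR_sorted SP]. Qed.

Lemma get_ivl g x : sorted <%R (fsg g) -> m < x < M -> x \notin fsg g -> exists k, ivl (fsg g) x k.
Proof.
move=> st /andP[h1 h2] nx.
have a1 : head 0 (fsg g) < x by rewrite /fsg; case: (g); rewrite ?hP ?hQ.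
have a2 : x < last 0 (fsg g) by rewrite /fsg; case: (g); rewrite ?lP ?lQ.
have [k [hk hin]] := fs_ivl st a1 a2 nx.
by exists k; rewrite /ivl hk hin.
Qed.

Lemma not_both x : m < x < M -> x \in fsP -> x \in fsQ -> False.
Proof.
move=> /andP[h1 h2] a b; case: (Hfix a b) => e; rewrite e ltxx in h1 h2 => //.
Qed.

Definition prevOK (acc : word) (x : rat) : Prop :=
  forall l0 rest, acc = l0 :: rest -> forall k, ivl (fsg l0.1) x k -> l0.2 = dirg l0.1 k.

Variables (O : seq rat) (c0 : rat).
Hypothesis HfO : forall g c, c \in fsg g -> c \in O.

Definition BST0 (P Q : piso) (x : rat) (acc : word) : Prop :=
  [/\ G P Q, m < x < M,
      (forall z, z \in P ++ Q -> (z.1 \in O /\ z.2 \in O) \/ (z.1 <= x /\ z.2 <= x)),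
      weval P Q acc c0 = Some x & reduced acc].
Definition BST P Q x acc := BST0 P Q x acc /\ prevOK acc x.

Definition NN (x : rat) : nat := count (fun o => (x < o) && (o < M)) O.
Definition MU (x : rat) : nat := ((NN x).*2 + (x \in O))%N.

Lemma NN_mono x y : x <= y -> (NN y <= NN x)%N.
Proof.
move=> xy; apply: sub_count => o /andP[yo ->]; by rewrite (le_lt_trans xy yo).
Qed.

Lemma NN_lt x y o : x < o -> o <= y -> o \in O -> o < M -> (NN y < NN x)%N.
Proof.
move=> xo oy oO oM; apply: count_lt_ex.
  by move=> z /andP[yz ->]; rewrite (lt_trans xo (le_lt_trans oy yz)).
by exists o => //; rewrite xo oM !andbT -leNgt oy.
Qed.

Lemma NN0 x o : NN x = 0%N -> o \in O -> x < o -> o < M -> False.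
Proof.
move=> e oO xo oM; have : (0 < NN x)%N.
  by rewrite /NN -has_count; apply/hasP; exists o => //; rewrite xo oM.
by rewrite e.
Qed.

Lemma NN_min x : (0 < NN x)%N ->
  exists o, [/\ o \in O, x < o, o < M & forall o', o' \in O -> x < o' -> o' < M -> o <= o'].
Proof.
rewrite /NN -has_count => /hasP[o oO /andP[xo oM]].
set L := [seq o' <- O | (x < o') && (o' < M)].
have ne : L != [::].
  apply/eqP => e; have : o \in L by rewrite mem_filter xo oM oO.
  by rewrite e.
have [a ain amin] := seq_min ne.
move: ain; rewrite mem_filter => /andP[/andP[xa aM] aO].
exists a; split=> // o' o'O xo' o'M; apply: amin; by rewrite mem_filter xo' o'M o'O.
Qed.

Lemma BI_orient P Q x l z : 
  (forall z, z \in P ++ Q -> (z.1 \in O /\ z.2 \in O) \/ (z.1 <= x /\ z.2 <= x)) ->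
  z \in orient l P Q -> (z.1 \in O /\ z.2 \in O) \/ (z.1 <= x /\ z.2 <= x).
Proof.
move=> BI /orient_mem [h|h]; first exact: BI.
by case: (BI _ h) => [[a b]|[a b]]; [left|right].
Qed.


Lemma mem_add l P Q s y z : z \in addP l P s y ++ addQ l Q s y -> z \in P ++ Q \/ z = newpair l s y.
Proof.
move=> h; case E: (z == newpair l s y); first by right; apply/eqP.
left; move: h; rewrite /addP /addQ !mem_cat; case: l.1; by rewrite ?inE E.
Qed.

Lemma ivl_uniq fs x k j : sorted <%R fs -> ivl fs x k -> ivl fs x j -> k = j.
Proof.
move=> st /andP[hk hk2] /andP[hj hj2]; exact (fs_ivl_uniq st hk hj hk2 hj2).
Qed.

Lemma B_move P Q x acc g k T :
  BST0 P Q x acc -> reduced (ltr g k :: acc) -> ivl (fsg g) x k -> x <= T -> T < nth 0 (fsg g) k.+1 ->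
  (forall z, z \in orient (ltr g k) P Q -> x < z.1 -> z.1 <= T -> T < z.2) ->
  exists P' Q' y, [/\ BST P' Q' y (ltr g k :: acc), {subset P <= P'} /\ {subset Q <= Q'},
                      x < y /\ y < nth 0 (fsg g) k.+1 & (y \in O) \/ (T < y /\ y \notin O)].
Proof.
move=> [Gd hx BI ev red] red' hiv xT Tb HT.
have S := GOOD_orient (ltr g k) Gd; rewrite fsl_ltr in S.
have st := fsg_sorted g Gd.
have hiv' := hiv; case/andP: hiv' => hk hin.
have pok : forall y, ivl (fsg g) y k -> prevOK (ltr g k :: acc) y.
  move=> y hy l0 rest [<- _] j hj /=; by rewrite (ivl_uniq st hy hj).
case E: (papp (orient (ltr g k) P Q) x) => [y|].
  have hz := papp_mem E.
  have xy : x < y by have := STR_dirv S hk hz hin; rewrite dirl_ltr.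
  have hin2 := STR_same_ivl S hk hz hin.
  have yO : y \in O.
    case: (BI_orient BI hz) => [[_ //]|[_ /= yx]]; by rewrite leNgt xy in yx.
  exists P, Q, y; split.
  - split; last by apply: pok; rewrite /ivl hk hin2.
    split=> //.
    + exact (in_range (GOOD_orient (ltr g k) Gd) (head_l hP hQ (ltr g k)) (last_l lP lQ (ltr g k)) hz hx).
    + move=> z /BI [[a b]|[a b]]; [left|right] => //; split; exact: le_trans (ltW xy).
    + rewrite weval_cons ev; exact: (etrans (lact_orient _ _ _ _) E).
  - by split.
  - by split=> //; case/andP: hin2.
  - by left.
have Hlo : forall t, t \in [:: T] -> (forall z, z \in orient (ltr g k) P Q -> x < z.1 -> t < z.2) /\ (~~ DL (ltr g k) k -> t < x).
  move=> t; rewrite inE => /eqP->; split; last by rewrite dirl_ltr.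
  case/andP: hin => h1 h2.
  exact: (STR_up S hk h1 xT Tb (dirl_ltr g k) HT).
have [y [G' ly hdir [hL _] yO]] := step_new (l:=ltr g k) (eUp:=[::]) O Gd hk hin E Hlo
   (fun u (h : u \in [::]) => False_ind _ (notF h))
   (fun t u _ (h : u \in [::]) => False_ind _ (notF h)).
rewrite dirl_ltr in hdir.
have S' := GOOD_orient (ltr g k) G'; rewrite orient_add fsl_ltr in S'.
have hin2 := STR_same_ivl S' hk (mem_head _ _) hin.
exists (addP (ltr g k) P x y), (addQ (ltr g k) Q x y), y; split.
- split; last by apply: pok; rewrite /ivl hk hin2.
  split=> //.
  + exact (in_range S' (head_l hP hQ (ltr g k)) (last_l lP lQ (ltr g k)) (mem_head _ _) hx).
  + move=> z /mem_add [/BI [[a b]|[a b]]|->]; [left|right|right] => //.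
      split; exact: le_trans (ltW hdir).
    by rewrite /newpair; case: (ltr g k).2; rewrite /= lexx (ltW hdir).
  + rewrite weval_cons (weval_ext (GOOD_P G') (GOOD_Q G') (@sub_addP (ltr g k) P x y) (@sub_addQ (ltr g k) Q x y) ev).
    exact: ly.
- by split; [apply: sub_addP|apply: sub_addQ].
- by split=> //; case/andP: hin2.
- by right; split=> //; apply: hL; rewrite inE.
Qed.


Lemma red_cons l l0 rest : l0 != linv l -> reduced (l0 :: rest) -> reduced (l :: l0 :: rest).
Proof. by move=> h r; rewrite /reduced /= h. Qed.

Lemma red_ltr P Q x acc g k : BST P Q x acc -> ivl (fsg g) x k -> reduced (ltr g k :: acc).
Proof.
move=> [[_ _ _ _ red] pok] hiv; case: acc red pok => // l0 rest red pok.
apply: red_cons => //; apply/negP => /eqP e.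
have e1 : l0.1 = g by rewrite e.
have := pok l0 rest erefl k; rewrite e1 => /(_ hiv) e2.
have eb : l0.2 = ~~ dirg g k by rewrite e.
by rewrite e2 in eb; case: (dirg g k) eb.
Qed.

Lemma mv_exists x : m < x < M -> exists g, x \notin fsg g.
Proof.
move=> hx; case E: (x \in fsP); last by exists false; rewrite /fsg E.
case F: (x \in fsQ); last by exists true; rewrite /fsg F.
by case: (not_both hx E F).
Qed.

Lemma B_step P Q x acc : BST P Q x acc -> (0 < NN x)%N || (x \in O) ->
  exists l P' Q' y, [/\ BST P' Q' y (l :: acc), {subset P <= P'} /\ {subset Q <= Q'} & (MU y < MU x)%N].
Proof.
move=> B hc; have B' := B; case: B' => [[Gd hx BI ev red] pok].
have [g gx] := mv_exists hx.
have [k hiv] := get_ivl (fsg_sorted g Gd) hx gx.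
have hMy : forall P' Q' y acc', BST P' Q' y acc' -> y < M.
  by move=> ? ? ? ? [[_ /andP[_ ->] _ _ _] _].
case: (posnP (NN x)) => [N0|Npos].
  have xO : x \in O by move: hc; rewrite N0.
  have [P' [Q' [y [B2 sub [xy _] hy]]]] := B_move (proj1 B) (red_ltr B hiv) hiv (lexx x)
     (let: conj _ h := andP (proj2 (andP hiv)) in h) (@HT_triv _ x).
  exists (ltr g k), P', Q', y; split=> //.
  case: hy => [yO|[_ yO]].
    by case: (NN0 N0 yO xy (hMy _ _ _ _ B2)).
  have : NN y = 0%N by apply/eqP; rewrite -leqn0 -N0; apply: NN_mono; exact: ltW.
  by move=> e; rewrite /MU e xO (negbTE yO) N0.
have [o [oO xo oM omin]] := NN_min Npos.
case: (classic (exists g k, ivl (fsg g) x k /\ o < nth 0 (fsg g) k.+1)) => [[g' [k' [hiv' ob]]]|nex].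
  have HT : forall z, z \in orient (ltr g' k') P Q -> x < z.1 -> z.1 <= o -> o < z.2.
    move=> z hz xz zo.
    have S := GOOD_orient (ltr g' k') Gd; rewrite fsl_ltr in S.
    case: (BI_orient BI hz) => [[z1O _]|[zx _]]; last by rewrite leNgt xz in zx.
    have ez : z.1 = o by apply/eqP; rewrite eq_le zo omin // (le_lt_trans zo oM).
    case/andP: hiv' => hk' /andP[h1 h2].
    have := STR_dirv S hk' hz; rewrite dirl_ltr ez (lt_trans h1 xo) ob -ez; by apply.
  have [P' [Q' [y [B2 sub [xy _] hy]]]] := B_move (proj1 B) (red_ltr B hiv') hiv' (ltW xo) ob HT.
  exists (ltr g' k'), P', Q', y; split=> //.
  have yM := hMy _ _ _ _ B2.
  case: hy => [yO|[oy yO]].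
    have oy : o <= y by apply: omin.
    by have := NN_lt xo oy oO oM; rewrite /MU; apply: mu_lt.
  by have := NN_lt xo (ltW oy) oO oM; rewrite /MU; apply: mu_lt.
have wall : forall g1 k1, ivl (fsg g1) x k1 -> nth 0 (fsg g1) k1.+1 = o.
  move=> g1 k1 hv; case/andP: (hv) => hk1 /andP[h1 h2].
  have fO : nth 0 (fsg g1) k1.+1 \in O by exact: HfO (mem_nth 0 hk1).
  have nle : nth 0 (fsg g1) k1.+1 <= o.
    by rewrite leNgt; apply/negP => ob; apply: nex; exists g1, k1.
  apply/eqP; rewrite eq_le nle omin //; exact: le_lt_trans nle oM.
have xh : x \in fsg (~~ g).
  apply/negPn/negP => nx; have [k2 hv2] := get_ivl (fsg_sorted (~~ g) Gd) hx nx.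
  have e1 := wall g k hiv; have e2 := wall (~~ g) k2 hv2.
  have o1 : o \in fsg g by rewrite -e1; case/andP: hiv => hk _; exact: mem_nth.
  have o2 : o \in fsg (~~ g) by rewrite -e2; case/andP: hv2 => hk _; exact: mem_nth.
  have ho : m < o < M by case/andP: hx => hx1 _; rewrite (lt_trans hx1 xo) oM.
  by move: o1 o2; case: (g) => /= o1 o2; [apply: (not_both ho o2 o1)|apply: (not_both ho o1 o2)].
have xO : x \in O := HfO xh.
have [P' [Q' [y [B2 sub [xy yb] hy]]]] := B_move (proj1 B) (red_ltr B hiv) hiv (lexx x)
     (let: conj _ h := andP (proj2 (andP hiv)) in h) (@HT_triv _ x).
exists (ltr g k), P', Q', y; split=> //.
rewrite (wall g k hiv) in yb.
case: hy => [yO|[_ yO]].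
  by have := omin _ yO xy (lt_trans yb oM); rewrite leNgt yb.
by rewrite /MU xO (negbTE yO); apply: mu_le; apply: NN_mono; exact: ltW.
Qed.

Lemma B_iter n P Q x acc : (MU x < n)%N -> BST P Q x acc ->
  exists v P' Q' y, [/\ BST P' Q' y (v ++ acc), {subset P <= P'} /\ {subset Q <= Q'},
                       NN y = 0%N & y \notin O].
Proof.
elim: n P Q x acc => // n IH P Q x acc hn B.
case: (boolP ((0 < NN x)%N || (x \in O))) => hc.
  have [l [P1 [Q1 [y [B1 [s1 s2] hmu]]]]] := B_step B hc.
  have [v [P2 [Q2 [z [B2 [t1 t2] e zO]]]]] := IH _ _ _ _ (leq_trans hmu hn) B1.
  exists (v ++ [:: l]), P2, Q2, z; rewrite -catA /=; split=> //.
  by split; apply: sub_trans; eassumption.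
move: hc; rewrite negb_or -eqn0Ngt => /andP[/eqP N0 xO].
by exists [::], P, Q, x; split=> //; split.
Qed.

Lemma linv_fst l : (linv l).1 = l.1. Proof. by []. Qed.

Lemma neq_linv l0 l : l0.1 != l.1 -> l0 != linv l.
Proof. by move=> h; apply/eqP => e; move: h; rewrite e linv_fst eqxx. Qed.

Lemma B_junction P Q x acc : G P Q -> m < x < M ->
  (forall z, z \in P ++ Q -> z.1 \in O /\ z.2 \in O) ->
  weval P Q acc c0 = Some x -> reduced acc ->
  exists v P' Q' y, BST P' Q' y (v ++ acc) /\ ({subset P <= P'} /\ {subset Q <= Q'}).
Proof.
move=> Gd hx AO ev red.
have B0 : BST0 P Q x acc by split=> // z /AO h; left.
case: acc ev red B0 => [|l0 rest] ev red B0.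
  by exists [::], P, Q, x; split; [split=> // l0 rest|split].
case: (boolP (x \in fsg l0.1)) => x0.
  exists [::], P, Q, x; split; last by split.
  split=> // l1 r1 [<- _] k hk.
  by rewrite (negbTE (ivl_notin (fsg_sorted l0.1 Gd) hk)) in x0.
have [k0 hk0] := get_ivl (fsg_sorted _ Gd) hx x0.
case: (eqVneq l0.2 (dirg l0.1 k0)) => e0.
  exists [::], P, Q, x; split; last by split.
  by split=> // l1 r1 [<- _] k hk; rewrite (ivl_uniq (fsg_sorted _ Gd) hk hk0).
set h := ~~ l0.1.
have hne : forall b, l0.1 != (h, b).1 by move=> b; rewrite /h /=; case: (l0.1).
case: (boolP (x \in fsg h)) => xh.
  exists [:: (h, true)], P, Q, x; split; last by split.
  split; last first.
    by move=> l1 r1 [<- _] k hk; rewrite (negbTE (ivl_notin (fsg_sorted h Gd) hk)) in xh.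
  case: B0 => _ _ BI _ _; split=> //.
    rewrite weval_cons ev; apply: (etrans (lact_orient _ _ _ _)); apply: mem_papp; first exact: GOOD_orient_piso Gd.
    have S := GOOD_orient (h, true) Gd; exact (STR_fix S xh).
  by apply: red_cons => //; apply: neq_linv; exact: hne.
have [kh hkh] := get_ivl (fsg_sorted h Gd) hx xh.
have red' : reduced (ltr h kh :: l0 :: rest) by apply: red_cons => //; apply: neq_linv; exact: hne.
have [P' [Q' [y [B2 sub _ _]]]] := B_move B0 red' hkh (lexx x)
     (let: conj _ h := andP (proj2 (andP hkh)) in h) (@HT_triv _ x).
by exists [:: ltr h kh], P', Q', y.
Qed.

Lemma phaseB P Q x acc : G P Q -> m < x < M ->
  (forall z, z \in P ++ Q -> z.1 \in O /\ z.2 \in O) ->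
  weval P Q acc c0 = Some x -> reduced acc ->
  exists v P' Q' y, [/\ BST P' Q' y (v ++ acc), {subset P <= P'} /\ {subset Q <= Q'},
                       NN y = 0%N & y \notin O].
Proof.
move=> Gd hx AO ev red.
have [v1 [P1 [Q1 [x1 [B1 [s1 s2]]]]]] := B_junction Gd hx AO ev red.
have [v2 [P2 [Q2 [y [B2 [t1 t2] e yO]]]]] := B_iter (ltnSn _) B1.
exists (v2 ++ v1), P2, Q2, y; rewrite -catA; split=> //.
by split; apply: sub_trans; eassumption.
Qed.

End PhaseB.

Section Rungs.
Variables (r0 dd : rat).
Hypothesis hd : 0 < dd.

Definition rg (i : nat) : rat := r0 + i%:R * dd.

Lemma rg_lt i j : (rg i < rg j) = (i < j)%N.
Proof. by rewrite /rg ltrD2l ltr_pM2r // ltr_nat. Qed.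
Lemma rg_le i j : (rg i <= rg j) = (i <= j)%N.
Proof. by rewrite /rg lerD2l ler_pM2r // ler_nat. Qed.
Lemma rg_S i : rg i < rg i.+1. Proof. by rewrite rg_lt. Qed.
Lemma rg_0 : rg 0 = r0. Proof. by rewrite /rg mul0r addr0. Qed.

Definition RI (z : rat * rat) : Prop :=
  [/\ (forall i, z.1 < rg i -> z.2 < rg i.+1), (forall i, z.2 < rg i -> z.1 < rg i.+1),
      (forall i, rg i.+1 < z.1 -> rg i < z.2) & (forall i, rg i.+1 < z.2 -> rg i < z.1)].

Lemma RI_swap z : RI z -> RI (z.2, z.1).
Proof. by case=> a b c d; split. Qed.

Lemma RI_low z : z.1 <= rg 0 -> z.2 <= rg 0 -> RI z.
Proof.
move=> h1 h2; have H : forall i, rg 0 < rg i.+1 by move=> i; rewrite rg_lt.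
split=> i h.
- exact: le_lt_trans h2 (H i).
- exact: le_lt_trans h1 (H i).
- by move: (lt_le_trans h (le_trans h1 (ltW (H i)))); rewrite ltxx.
- by move: (lt_le_trans h (le_trans h2 (ltW (H i)))); rewrite ltxx.
Qed.

Lemma RI_MM a : RI (a, a).
Proof.
split=> i /= h; first by apply: lt_trans h (rg_S i).
- by apply: lt_trans h (rg_S i).
- by apply: lt_trans (rg_S i) h.
- by apply: lt_trans (rg_S i) h.
Qed.

Lemma RI_blk j : RI (rg j, rg j.+1).
Proof.
split=> i /=; rewrite !rg_lt.
- by [].
- by move=> h; rewrite ltnS (leq_trans (leqnSn _) (ltnW h)).
- by move=> h; rewrite ltnS (leq_trans (leqnSn _) (ltnW h)).
- by [].
Qed.

End Rungs.

Fixpoint sOK (K : nat) (w : word) : bool :=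
  if w is l :: w' then (l.1 || (size w' < K)%N) && sOK K w' else true.

Lemma mem_addP l P s y z : z \in addP l P s y -> z \in P \/ (l.1 = false /\ z = newpair l s y).
Proof.
rewrite /addP; case: l.1 => [|]; first by left.
rewrite inE => /orP[/eqP->|h]; [by right|by left].
Qed.

Section Others.
Variables (p q : piso) (fsP fsQ : seq rat) (dirP dirQ : nat -> bool) (m M : rat).
Hypothesis hP : head 0 fsP = m.
Hypothesis lP : last 0 fsP = M.
Hypothesis hQ : head 0 fsQ = m.
Hypothesis lQ : last 0 fsQ = M.
Variables (r0 dd : rat) (Nb K : nat).
Hypothesis hd : 0 < dd.
Hypothesis hNb : M <= rg r0 dd Nb.

Local Notation rg := (rg r0 dd).
Local Notation RI := (RI r0 dd).
Local Notation G := (GOOD p q fsP fsQ dirP dirQ).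

Lemma rgS i : rg i < rg i.+1. Proof. exact (rg_S r0 hd i). Qed.
Lemma rgle i j : (rg i <= rg j) = (i <= j)%N. Proof. exact (rg_le r0 hd i j). Qed.

Definition RIall P Q := forall z, z \in P ++ Q -> RI z.
Definition PB (P : piso) := forall z, z \in P -> z = (M, M) \/ (z.1 < rg K /\ z.2 < rg K).

Lemma RI_orient P Q l z : RIall P Q -> z \in orient l P Q -> RI z.
Proof.
move=> H /orient_mem [h|h]; first exact: H.
by have := RI_swap (H _ h).
Qed.

Lemma big_i i : (Nb <= i)%N -> M <= rg i.
Proof. by move=> h; apply: le_trans hNb _; rewrite rgle. Qed.

Lemma small_i i x : rg i <= x -> x < M -> (i < Nb)%N.
Proof.
move=> h1 h2; rewrite ltnNge; apply/negP => /big_i h3.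
by have := lt_le_trans (le_lt_trans h1 h2) h3; rewrite ltxx.
Qed.

Lemma others_step P Q l s : G P Q -> RIall P Q -> m < s < M -> papp (orient l P Q) s = None ->
  exists y, [/\ G (addP l P s y) (addQ l Q s y), RIall (addP l P s y) (addQ l Q s y),
                lact (addP l P s y) (addQ l Q s y) l s = Some y & m < y < M].
Proof.
move=> Gd RA hs E.
have S := GOOD_orient l Gd.
have nf := not_fixed S E.
have hs' := hs; case/andP: hs' => hs1 hs2.
have a1 : head 0 (fsl fsP fsQ l) < s by rewrite (head_l hP hQ).
have a2 : s < last 0 (fsl fsP fsQ l) by rewrite (last_l lP lQ).
have [k [hk hin]] := fs_ivl (STR_sorted S) a1 a2 nf.
set LoR := [seq rg i | i <- iota 0 Nb & rg i.+1 <= s].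
set UpR := [seq rg i.+1 | i <- iota 0 Nb & s <= rg i].
have HL : forall x, x \in LoR -> (forall z, z \in orient l P Q -> s < z.1 -> x < z.2) /\
                                 (~~ dirl dirP dirQ l k -> x < s).
  move=> x /mapP[i]; rewrite mem_filter => /andP[hi _] ->; split.
    move=> z hz sz; case: (RI_orient RA hz) => _ _ h _; apply: h.
    exact: le_lt_trans hi sz.
  by move=> _; exact: lt_le_trans (rgS i) hi.
have HU : forall u, u \in UpR -> (forall z, z \in orient l P Q -> z.1 < s -> z.2 < u) /\
                                 (dirl dirP dirQ l k -> s < u).
  move=> u /mapP[i]; rewrite mem_filter => /andP[hi _] ->; split.
    move=> z hz zs; case: (RI_orient RA hz) => h _ _ _; apply: h.
    exact: lt_le_trans zs hi.
  by move=> _; exact: le_lt_trans hi (rgS i).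
have HLU : forall x u, x \in LoR -> u \in UpR -> x < u.
  move=> x u /mapP[i]; rewrite mem_filter => /andP[hi _] -> /mapP[j]; rewrite mem_filter => /andP[hj _] ->.
  apply: lt_trans (rgS i) _; apply: le_lt_trans hi _; exact: le_lt_trans hj (rgS j).
have [y [G' ly _ [yL yU] _]] := step_new [::] Gd hk hin E HL HU HLU.
have S' := GOOD_orient l G'; rewrite orient_add in S'.
have hy : m < y < M.
  exact (in_range S' (head_l hP hQ l) (last_l lP lQ l) (mem_head _ _) hs).
have yM : y < M by case/andP: hy.
have inLo : forall i, (i < Nb)%N -> rg i.+1 <= s -> rg i < y.
  by move=> i hi h; apply: yL; apply/mapP; exists i => //; rewrite mem_filter h mem_iota.
have inUp : forall i, (i < Nb)%N -> s <= rg i -> y < rg i.+1.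
  by move=> i hi h; apply: yU; apply/mapP; exists i => //; rewrite mem_filter h mem_iota.
have RIsy : RI (s, y).
  split=> i /= h.
  - case: (ltnP i Nb) => hi; first exact: inUp hi (ltW h).
    exact: lt_le_trans yM (le_trans (big_i hi) (ltW (rgS i))).
  - rewrite ltNge; apply/negP => h2.
    have hi : (i < Nb)%N by apply: ltn_trans (ltnSn i) (small_i h2 hs2).
    by have := inLo i hi h2; rewrite ltNge (ltW h).
  - have hi : (i < Nb)%N by apply: ltn_trans (ltnSn i) (small_i (ltW h) hs2).
    exact: inLo hi (ltW h).
  - rewrite ltNge; apply/negP => h2.
    case: (ltnP i Nb) => hi.
      by have := inUp i hi h2; rewrite ltNge (ltW h).
    have := lt_trans h yM; rewrite ltNge (le_trans (big_i hi) (ltW (rgS i))) //.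
exists y; split=> //.
move=> z /mem_add [/RA //|->]; rewrite /newpair; case: (l.2) => //.
exact: (RI_swap RIsy).
Qed.

Lemma others_path P Q w c : G P Q -> RIall P Q -> PB P -> sOK K w -> m < c < M -> c < rg 0 ->
  exists P' Q' d, [/\ G P' Q', {subset P <= P'} /\ {subset Q <= Q'}, RIall P' Q' /\ PB P',
                      weval P' Q' w c = Some d & (m < d < M) /\ d < rg (size w)].
Proof.
move=> Gd RA PBP + hc hc0; elim: w => [_|l w IH /andP[hl hw]].
  by exists P, Q, c; split=> //; split.
have [P1 [Q1 [x [G1 [s1 s2] [RA1 PB1] e1 [hx hxr]]]]] := IH hw.
case E: (papp (orient l P1 Q1) x) => [y|].
  have hz := papp_mem E.
  exists P1, Q1, y; split=> //.
  - by rewrite weval_cons e1 /= lact_orient.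
  - split; first exact (in_range (GOOD_orient l G1) (head_l hP hQ l) (last_l lP lQ l) hz hx).
    by case: (RI_orient RA1 hz) => h _ _ _; apply: h.
have [y [G2 RA2 ly hy]] := others_step G1 RA1 hx E.
have RIxy : RI (x, y).
  by have := RA2 (newpair l x y); rewrite mem_cat; rewrite /addP /addQ /newpair;
     case: (l.1); case: (l.2); rewrite ?inE ?eqxx ?orbT => /(_ isT) // /RI_swap.
exists (addP l P1 x y), (addQ l Q1 x y), y; split=> //.
- by split; apply: sub_trans; [exact: s1|exact: sub_addP|exact: s2|exact: sub_addQ].
- split=> // z /mem_addP [/PB1 //|[l1 ->]]; right.
  move: hl; rewrite l1 /= => hK.
  have hyr : y < rg (size w).+1 by case: RIxy => h _ _ _; apply: h.
  have hle : rg (size w).+1 <= rg K by rewrite rgle.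
  rewrite /newpair; case: (l.2) => /=; split;
    by [apply: lt_le_trans hyr hle|apply: lt_le_trans (lt_trans hxr (rgS _)) hle].
- rewrite weval_cons (weval_ext (GOOD_P G2) (GOOD_Q G2) (@sub_addP l P1 x y) (@sub_addQ l Q1 x y) e1).
  exact: ly.
- by split=> //; case: RIxy => h _ _ _; apply: h.
Qed.

Lemma others_all P Q w (cs : seq rat) : G P Q -> RIall P Q -> PB P -> sOK K w ->
  (forall c, c \in cs -> m < c < M /\ c < rg 0) ->
  exists P' Q', [/\ G P' Q', {subset P <= P'} /\ {subset Q <= Q'}, RIall P' Q' /\ PB P' &
                   forall c, c \in cs -> exists d, weval P' Q' w c = Some d].
Proof.
move=> Gd RA PBP hw; elim: cs => [_|c cs IH Hc].
  by exists P, Q; split=> //; split.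
have [P1 [Q1 [G1 [s1 s2] [RA1 PB1] H1]]] := IH (fun c' h => Hc c' (@mem_behead _ (c :: cs) c' h)).
have [hc hc0] := Hc c (mem_head _ _).
have [P2 [Q2 [d [G2 [t1 t2] [RA2 PB2] e2 _]]]] := others_path G1 RA1 PB1 hw hc hc0.
exists P2, Q2; split=> //.
  by split; apply: sub_trans; eassumption.
move=> c'; rewrite inE => /orP[/eqP->|h]; first by exists d.
have [d' e'] := H1 c' h; exists d'.
exact: weval_ext (GOOD_P G2) (GOOD_Q G2) t1 t2 e'.
Qed.

End Others.

Lemma linvK l : linv (linv l) = l. Proof. by case: l => a b; rewrite /linv /= negbK. Qed.

Lemma reduce_id w : reduced w -> reduce w = w.
Proof.
elim: w => // l w IH; rewrite /reduced /=.
case: w IH => [|l0 w] IH /= h; first by [].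
case/andP: h => h1 h2.
rewrite /reduced /= in IH; rewrite (IH h2).
suff -> : (l0 == linv l) = false by [].
exact: negbTE.
Qed.

Lemma reduced_cat_r a b : reduced (a ++ b) -> reduced b.
Proof.
elim: a => // l a IH; rewrite /reduced /= => h; apply: IH.
by move: h; rewrite /reduced; case: (a ++ b) => //= x s /andP[].
Qed.

Lemma reduced_cat_l a b : reduced (a ++ b) -> reduced a.
Proof.
elim: a => // l a IH; rewrite /reduced /=.
case: a IH => // l1 a IH /= /andP[h1 h2]; rewrite h1 /=.
by have := IH h2; rewrite /reduced /=.
Qed.

Lemma wlen_red w : reduced w -> wlen w = size w.
Proof. by move=> h; rewrite /wlen reduce_id. Qed.

Lemma wlen_cat v u : reduced (v ++ u) -> wlen (v ++ u) = (wlen v + wlen u)%N.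
Proof.
move=> h; rewrite (wlen_red h) (wlen_red (reduced_cat_l h)) (wlen_red (reduced_cat_r h)).
by rewrite size_cat.
Qed.

Lemma weval_mono P Q w c1 c2 d1 d2 : partial_iso P -> partial_iso Q ->
  weval P Q w c1 = Some d1 -> weval P Q w c2 = Some d2 -> c1 <= c2 -> d1 <= d2.
Proof.
move=> hP hQ; elim: w d1 d2 => [|l w IH] d1 d2 /=; first by move=> [<-] [<-].
case E1: (weval P Q w c1) => [x1|] //=; case E2: (weval P Q w c2) => [x2|] //=.
rewrite !lact_orient => h1 h2 c12.
have x12 := IH _ _ E1 E2 c12.
have P' := orient_piso (l:=l) hP hQ.
have := piso_le P' (papp_mem h1) (papp_mem h2); rewrite /= x12.
by move/esym.
Qed.

Lemma weval_fun P Q w c d1 d2 : weval P Q w c = Some d1 -> weval P Q w c = Some d2 -> d1 = d2.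
Proof. by move=> -> []. Qed.

Lemma rg_top (x M : rat) (r : nat) : rg x ((M - x) / (r.+1)%:R) r.+1 = M.
Proof. by rewrite /rg mulrC divfK ?pnatr_eq0 // addrC subrK. Qed.

Lemma dd_pos (x M : rat) (r : nat) : x < M -> 0 < (M - x) / (r.+1)%:R.
Proof. by move=> h; rewrite divr_gt0 // ?subr_gt0 // ltr0Sn. Qed.

Definition coords (P : piso) : seq rat := [seq z.1 | z <- P] ++ [seq z.2 | z <- P].

Lemma coordsP (P : piso) z : z \in P -> z.1 \in coords P /\ z.2 \in coords P.
Proof. by move=> h; rewrite /coords !mem_cat !map_f ?orbT. Qed.

Lemma coordsE (P : piso) c : c \in coords P -> exists2 z, z \in P & c = z.1 \/ c = z.2.
Proof.
rewrite /coords mem_cat => /orP[] /mapP[z hz ->]; exists z => //; by [left|right].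
Qed.

Lemma sOK_acc K (acc : word) : (size acc <= K)%N -> sOK K acc.
Proof.
elim: acc => //= l acc IH h; rewrite IH ?(ltnW h) // (leq_trans _ h) ?orbT //.
Qed.

Lemma sOK_nseq K n (bl : letter) acc : bl.1 -> sOK K acc -> sOK K (nseq n bl ++ acc).
Proof. by move=> h1 h2; elim: n => //= n ->; rewrite h1. Qed.

Section Main.
Variables (p q : piso) (fsP fsQ : seq rat) (dirP dirQ : nat -> bool) (m M : rat).
Hypothesis SP : STR p fsP dirP.
Hypothesis SQ : STR q fsQ dirQ.
Hypothesis hP : head 0 fsP = m.
Hypothesis lP : last 0 fsP = M.
Hypothesis hQ : head 0 fsQ = m.
Hypothesis lQ : last 0 fsQ = M.
Hypothesis Hfix : forall c, c \in fsP -> c \in fsQ -> c = m \/ c = M.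

Local Notation G := (GOOD p q fsP fsQ dirP dirQ).

Lemma G0 : G p q. Proof. by split. Qed.

Section Block.
Variables (P Q : piso) (xK dd : rat) (acc : word) (c0 : rat) (r kq : nat).
Hypothesis GPQ : G P Q.
Hypothesis Hcl : forall z, z \in P ++ Q -> z = (M, M) \/ (z.1 <= xK /\ z.2 <= xK).
Hypothesis Hkq : ivl fsQ xK kq.
Hypothesis Hkq1 : nth 0 fsQ kq.+1 = M.
Hypothesis hdd : 0 < dd.
Hypothesis Htop : rg xK dd r.+1 = M.
Hypothesis Hev : weval P Q acc c0 = Some xK.
Hypothesis Hred : reduced acc.
Hypothesis Hpok : prevOK fsP fsQ dirP dirQ acc xK.

Local Notation rg := (rg xK dd).
Definition bl : letter := (true, dirQ kq).

Lemma dirl_bl : dirl dirP dirQ bl kq = true.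
Proof. by rewrite /dirl /bl /=; case: (dirQ kq). Qed.

Lemma rg_ltM n : (n <= r)%N -> rg n < M.
Proof. by move=> h; rewrite -Htop (rg_lt xK hdd) ltnS. Qed.

Lemma rg0_le n : xK <= rg n.
Proof. by move: (rg_le xK hdd 0 n); rewrite (rg_0 xK dd) leq0n => ->. Qed.
Lemma rg0_lt n : xK < rg n.+1.
Proof. by move: (rg_lt xK hdd 0 n.+1); rewrite (rg_0 xK dd) ltn0Sn => ->. Qed.

Lemma block n : (n <= r)%N ->
  exists Q', [/\ G P Q', {subset Q <= Q'},
     (forall z, z \in Q' -> z \in Q \/ exists2 j, (j < n)%N & z = newpair bl (rg j) (rg j.+1)),
     weval P Q' (nseq n bl ++ acc) c0 = Some (rg n) & reduced (nseq n bl ++ acc)].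
Proof.
elim: n => [_|n IH hn].
  by exists Q; split=> //; [move=> z h; left|rewrite /= (rg_0 xK dd)].
have [Q1 [G1 s1 cl1 ev1 red1]] := IH (ltnW hn).
have S := GOOD_orient bl G1.
have clz : forall z, z \in orient bl P Q1 ->
    z = (M, M) \/ (z.1 <= xK /\ z.2 <= xK) \/ exists2 j, (j < n)%N & z = (rg j, rg j.+1).
  move=> z; rewrite /orient /bl /=.
  have H : forall w, w \in Q1 -> w = (M, M) \/ (w.1 <= xK /\ w.2 <= xK) \/
         exists2 j, (j < n)%N & w = newpair bl (rg j) (rg j.+1).
    move=> w /cl1 [wQ|[j hj ->]]; last by right; right; exists j.
    have := @Hcl w; rewrite mem_cat wQ orbT => /(_ isT) [->|h]; by [left|right; left].
  case E: (dirQ kq) => hz.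
    case: (H _ hz) => [->|[h|[j hj ->]]]; [by left|by right; left|right; right; exists j => //].
    by rewrite /newpair /bl /= E.
  rewrite mem_swapp in hz; case: (H _ hz) => [e|[[h1 h2]|[j hj e]]].
  - by left; case: z hz e => a b /= _ [-> ->].
  - by right; left.
  - right; right; exists j => //; move: e; rewrite /newpair /bl /= E; case: z {hz} => a b /= [-> ->].
    by [].
have hin : nth 0 (fsl fsP fsQ bl) kq < rg n < nth 0 (fsl fsP fsQ bl) kq.+1.
  case/andP: Hkq => _ /andP[h1 _]; rewrite /fsl /= Hkq1; apply/andP; split; last exact: rg_ltM (ltnW hn).
  exact: lt_le_trans h1 (rg0_le n).
have hk : (kq.+1 < size (fsl fsP fsQ bl))%N by case/andP: Hkq.
have rgM : rg n.+1 < M by apply: rg_ltM.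
have r0n : forall j, (j < n)%N -> rg j.+1 <= rg n by move=> j hj; rewrite (rg_le xK hdd).
have S' : STR ((rg n, rg n.+1) :: orient bl P Q1) (fsl fsP fsQ bl) (dirl dirP dirQ bl).
  apply: (STR_ext S hk hin); last by rewrite dirl_bl (rg_S xK hdd).
  - move=> z hz; apply/eqP => ez.
    case: (clz z hz) => [e|[[h1 h2]|[j hj e]]].
    + by move: (rg_ltM (ltnW hn)); rewrite -ez e ltxx.
    + have := STR_dirv S hk hz; rewrite dirl_bl ez => /(_ hin) h.
      by move: (le_trans h2 (rg0_le n)); rewrite leNgt h.
    + by move: ez; rewrite e /= => /eqP; rewrite eq_le !(rg_le xK hdd) [(n <= j)%N]leqNgt hj andbF.
  - move=> z hz; case: (clz z hz) => [->|[[h1 h2]|[j hj ->]]] /= zn.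
    + by move: (lt_trans zn (rg_ltM (ltnW hn))); rewrite ltxx.
    + exact: le_lt_trans h2 (rg0_lt n).
    + by apply: le_lt_trans (r0n _ hj) (rg_S xK hdd _).
  - move=> z hz; case: (clz z hz) => [->|[[h1 h2]|[j hj ->]]] /= nz.
    + exact: rgM.
    + by move: (lt_le_trans nz h1); rewrite ltNge (rg0_le n).
    + by rewrite (rg_lt xK hdd) in nz; move: (ltn_trans nz hj); rewrite ltnn.
have G2 := GOOD_add G1 S'.
exists (addQ bl Q1 (rg n) (rg n.+1)); split.
- exact: G2.
- by move=> z /s1 h; rewrite /addQ /= inE h orbT.
- move=> z; rewrite /addQ /= inE => /orP[/eqP->|/cl1 [h|[j hj e]]]; first by right; exists n.
  + by left.
  + by right; exists j => //; apply: ltnW.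
- change (weval P (addQ bl Q1 (rg n) (rg n.+1)) (bl :: (nseq n bl ++ acc)) c0 = Some (rg n.+1)); rewrite weval_cons.
  have e1 := weval_ext (GOOD_P G2) (GOOD_Q G2) (fun z (h : z \in P) => h) (@sub_addQ bl Q1 (rg n) (rg n.+1)) ev1.
  rewrite e1; apply: (etrans (lact_orient _ _ _ _)); by rewrite (orient_add bl P Q1) papp_head.
- rewrite /=; case: n {IH hn s1 cl1 ev1 clz hin r0n S' G2 rgM} red1 => [|n] red1 /=.
    case: acc Hred Hpok red1 => // l0 rest _ pok red1; apply: red_cons => //.
    case E: (l0.1); last by apply: neq_linv; rewrite E.
    have := pok l0 rest erefl kq; rewrite E => /(_ Hkq) e2.
    by apply/eqP => e; move: e2; rewrite e /linv /bl /=; case: (dirQ kq).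
  by apply: red_cons => //; rewrite /linv /bl /=; apply/eqP => [[]]; case: (dirQ kq).
Qed.

End Block.

Lemma weval_range P Q w c d : G P Q -> m < c < M -> weval P Q w c = Some d -> m < d < M.
Proof.
move=> Gd hc; elim: w d => [|l w IH] d /=; first by case=> <-.
case E: (weval P Q w c) => [x|] //= h.
rewrite lact_orient in h.
exact (in_range (GOOD_orient l Gd) (head_l hP hQ l) (last_l lP lQ l) (papp_mem h) (IH _ E)).
Qed.

Definition Elist := [seq c <- coords p ++ coords q | (c != m) && (c != M)].

Lemma dminp : dmin p = m. Proof. by rewrite (STR_dmin SP). Qed.
Lemma dmaxp : dmax p = M. Proof. by rewrite (STR_dmax SP). Qed.
Lemma dminq : dmin q = m. Proof. by rewrite (STR_dmin SQ). Qed.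
Lemma dmaxq : dmax q = M. Proof. by rewrite (STR_dmax SQ). Qed.

Lemma E_mem c : (ess p c || ess q c) = (c \in Elist).
Proof.
rewrite /ess /Elist mem_filter mem_cat dminp dmaxp dminq dmaxq /coords !mem_cat.
rewrite /dom /ran; case: (c != m); case: (c != M); rewrite /= ?andbF // !andbT; by rewrite orbA.
Qed.

Lemma coords_range (P : piso) fs dir c : STR P fs dir -> head 0 fs = m -> last 0 fs = M ->
  c \in coords P -> m <= c <= M.
Proof.
move=> S hh hl /coordsE [z hz [->|->]]; rewrite -hh -hl; [exact (STR_dom S hz)|exact (STR_ran S hz)].
Qed.

Lemma Elist_range c : c \in Elist -> m < c < M.
Proof.
rewrite /Elist mem_filter => /andP[/andP[cm cM]]; rewrite mem_cat => /orP[h|h].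
  have /andP[h1 h2] := coords_range SP hP lP h.
  by rewrite !lt_neqAle h1 h2 eq_sym cm cM.
have /andP[h1 h2] := coords_range SQ hQ lQ h.
by rewrite !lt_neqAle h1 h2 eq_sym cm cM.
Qed.

Lemma coords_sub (P P' : piso) c : {subset P <= P'} -> c \in coords P -> c \in coords P'.
Proof. by move=> s /coordsE [z /s hz [->|->]]; case: (coordsP hz). Qed.

Lemma libp (u : word) : reduced u -> Elist != [::] ->
  exists v P' Q', reduced (v ++ u) /\ liberates_p p q P' Q' (v ++ u).
Proof.
move=> hu Ene.
have [cmin cminE cminMin] := seq_min Ene.
have hcm := Elist_range cminE.
have [P1 [Q1 [x1 [G1 [s1 s2] ev1 hx1]]]] := path_any hP lP hQ lQ u G0 hcm.
set O := coords (P1 ++ Q1).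
have AO : forall z, z \in P1 ++ Q1 -> z.1 \in O /\ z.2 \in O by move=> z /coordsP.
have HfO : forall g c, c \in fsg fsP fsQ g -> c \in O.
  move=> g c; case: G1 => SP1 SQ1 _ _; case: g => /= hc.
    by case: (AO (c, c)); rewrite // mem_cat (STR_fix SQ1 hc) orbT.
  by case: (AO (c, c)); rewrite // mem_cat (STR_fix SP1 hc).
have [vB [P2 [Q2 [xK [[[G2 hxK BI ev2 red2] pok2] [s3 s4] N0 xKO]]]]] :=
  phaseB hP lP hQ lQ Hfix (c0:=cmin) HfO G1 hx1 AO ev1 hu.
have Oless : forall o, o \in O -> o < M -> o < xK.
  move=> o oO oM; rewrite lt_neqAle; apply/andP; split.
    by apply/eqP => e; move: xKO; rewrite -e oO.
  by rewrite leNgt; apply/negP => xo; apply: (NN0 N0 oO xo oM).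
have OleM : forall o, o \in O -> o <= M.
  move=> o /coordsE [z]; rewrite mem_cat; case: G1 => SP1 SQ1 _ _.
  case/orP => hz [->|->].
  - by case/andP: (STR_dom SP1 hz); rewrite lP.
  - by case/andP: (STR_ran SP1 hz); rewrite lP.
  - by case/andP: (STR_dom SQ1 hz); rewrite lQ.
  - by case/andP: (STR_ran SQ1 hz); rewrite lQ.
have hEO : forall c, c \in Elist -> c \in O.
  move=> c; rewrite /Elist mem_filter mem_cat => /andP[_ /orP[h|h]]; apply: (coords_sub _ h);
    move=> z hz; rewrite mem_cat; [by rewrite (s1 z hz)|by rewrite (s2 z hz) orbT].
have Hcl : forall z, z \in P2 ++ Q2 -> z = (M, M) \/ (z.1 <= xK /\ z.2 <= xK).
  move=> z hz; case: (BI z hz) => [[o1 o2]|h]; last by right.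
  have [phi [fs [dir [S zin lf]]]] : exists phi fs dir, [/\ STR phi fs dir, z \in phi & last 0 fs = M].
    case: G2 => SP2 SQ2 _ _; move: hz; rewrite mem_cat => /orP[h|h];
      [exists P2, fsP, dirP | exists Q2, fsQ, dirQ]; by split.
  have Mfs : M \in fs.
    have ne := STR_ne S; rewrite -lf; case: fs ne {S lf} => // a t _; by rewrite /= mem_last.
  case: (eqVneq z.1 M) => e1.
    have h1 : z.1 \in fs by rewrite e1.
    left; have e2 := STR_fixed_eq S zin h1.
    by case: z {zin o1 o2 hz h1} e1 e2 => a b /= -> ->.
  have z1M : z.1 < M by rewrite lt_neqAle e1 OleM.
  case: (eqVneq z.2 M) => e2.
    have h2 : z.2 \in fs by rewrite e2.
    by have := STR_fixed_eq2 S zin h2; rewrite e2 => e; rewrite e eqxx in e1.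
  have z2M : z.2 < M by rewrite lt_neqAle e2 OleM.
  by right; split; apply: ltW; apply: Oless.
have xKQ : xK \notin fsQ by apply/negP => h; move: xKO; rewrite (HfO true xK h).
have [kq hkq] := get_ivl hP lP hQ lQ (g:=true) (STR_sorted SQ) hxK xKQ.
have Hkq1 : nth 0 fsQ kq.+1 = M.
  case/andP: (hkq) => hk /andP[_ h2].
  have f : nth 0 fsQ kq.+1 \in O by apply: (HfO true); exact: mem_nth.
  have le : nth 0 fsQ kq.+1 <= M by rewrite -lQ; exact (nth_le_last (STR_sorted SQ) hk).
  apply/eqP; rewrite eq_le le /= leNgt; apply/negP => lt.
  by have := Oless _ f lt; rewrite ltNge (ltW h2).
set r := size (vB ++ u).
have r0 : (0 < r)%N.
  rewrite /r; case E: (vB ++ u) => [|l0 w0] //.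
  by move: ev2; rewrite E /= => [[e']]; move: xKO; rewrite -e' (hEO _ cminE).
have hxKM : xK < M by case/andP: hxK.
set dd := (M - xK) / (r.+1)%:R.
have hdd : 0 < dd := dd_pos r hxKM.
have Htop : rg xK dd r.+1 = M := rg_top xK M r.
have [Q3 [G3 s5 cl3 ev3 red3]] := block G2 Hcl hkq Hkq1 hdd Htop ev2 red2 pok2 (leqnn r).
have RA : RIall xK dd P2 Q3.
  have lowRI : forall z, z = (M, M) \/ (z.1 <= xK /\ z.2 <= xK) -> RI xK dd z.
    move=> z [->|[a b]]; first exact: RI_MM.
    by apply: RI_low => //; rewrite (rg_0 xK dd).
  move=> z; rewrite mem_cat => /orP[hz|hz].
    by apply: lowRI; apply: Hcl; rewrite mem_cat hz.
  case: (cl3 z hz) => [hz'|[j hj ->]].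
    by apply: lowRI; apply: Hcl; rewrite mem_cat hz' orbT.
  rewrite /newpair /bl /=; case: (dirQ kq); first exact: RI_blk.
  exact: (RI_swap (RI_blk xK hdd j)).
have xKr : xK < rg xK dd r.
  by move: (rg_lt xK hdd 0 r); rewrite (rg_0 xK dd) r0 => ->.
have PB2 : PB M xK dd r P2.
  move=> z hz; have hz' : z \in P2 ++ Q2 by rewrite mem_cat hz.
  case: (Hcl z hz') => [->|[a b]]; first by left.
  by right; split; apply: le_lt_trans xKr.
have sw : sOK r (nseq r (bl kq) ++ (vB ++ u)).
  by apply: sOK_nseq => //; apply: sOK_acc.
have Hcs : forall c, c \in Elist -> m < c < M /\ c < rg xK dd 0.
  move=> c hc; split; first exact: Elist_range hc.
  rewrite (rg_0 xK dd); apply: Oless; first exact: hEO.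
  by case/andP: (Elist_range hc).
have hNb : M <= rg xK dd r.+1 by rewrite Htop.
have [P4 [Q4 [G4 [s6 s7] [RA4 PB4] Hdef]]] := others_all hP lP hQ lQ hdd hNb G3 RA PB2 sw Hcs.
set w := nseq r (bl kq) ++ (vB ++ u).
have evmin : weval P4 Q4 w cmin = Some (rg xK dd r).
  exact: (weval_ext (GOOD_P G4) (GOOD_Q G4) s6 s7 ev3).
exists (nseq r (bl kq) ++ vB), P4, Q4; rewrite -catA; split; first exact: red3.
case: (G4) => SP4 SQ4 sp4 sq4.
have hk : (kq.+1 < size fsQ)%N by case/andP: hkq.
split.
- by split; [exact sp4|exact sq4|exact (STR_piso SP4)|exact (STR_piso SQ4)].
- by split; [exact: STR_informative SP4|exact: STR_informative SQ4].
- by split; rewrite ?(STR_dmin SP4) ?(STR_dmin SQ4) ?(STR_dmax SP4) ?(STR_dmax SQ4)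
     ?hP ?hQ ?lP ?lQ ?dminp ?dminq ?dmaxp ?dmaxq.
- exists (dirQ kq), (nseq r.-1 (bl kq) ++ (vB ++ u)); split.
    by rewrite -{1}(prednK r0).
  exists (nth 0 fsQ kq); split.
    move=> c; rewrite E_mem => hc; have [d ed] := Hdef c hc; exists d; split=> //.
    rewrite /in_open dmaxq.
    have /andP[_ hdM] := weval_range G4 (Elist_range hc) ed.
    have hmin : rg xK dd r <= d := weval_mono (GOOD_P G4) (GOOD_Q G4) evmin ed (cminMin c hc).
    case/andP: hkq => _ /andP[h1 _].
    by rewrite hdM andbT (lt_le_trans h1 (le_trans (ltW xKr) hmin)).
  rewrite /p_increasing /p_decreasing /fixedp dmaxq -Hkq1.
  have f1 := STR_nthfix SQ4 (ltnW hk); have f2 := STR_nthfix SQ4 hk.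
  case E: (dirQ kq); (split; [done|split; [done|]]) => x hx hin;
    by have := STR_dirv SQ4 hk hx hin; rewrite E.
- split.
    by move=> c; rewrite E_mem => hc; exact: Hdef.
  move=> c; rewrite E_mem => hc Hmin d ed z hz.
  have h1 : c <= cmin by apply: Hmin; rewrite E_mem.
  have ec : c = cmin by apply/eqP; rewrite eq_le h1 cminMin.
  rewrite ec in ed; rewrite (weval_fun ed evmin).
  move: hz; rewrite /ess (STR_dmax SP4) lP => /and3P[hz _ zM].
  have [w0 hw0 ez] : exists2 w0, w0 \in P4 & z = w0.1 \/ z = w0.2.
    by case/orP: hz => /mapP[w0 hw0 ->]; exists w0 => //; [left|right].
  case: (PB4 w0 hw0) => [e|[a b]].
    by move: zM; case: ez => ->; rewrite e eqxx.
  by case: ez => ->.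
Qed.
End Main.

Definition swl (l : letter) : letter := (~~ l.1, l.2).
Definition swapw (w : word) : word := map swl w.

Lemma swapwK w : swapw (swapw w) = w.
Proof. by elim: w => //= [[a b] w ->]; rewrite /swl /= negbK. Qed.

Lemma swapw_cat a b : swapw (a ++ b) = swapw a ++ swapw b. Proof. exact: map_cat. Qed.

Lemma reduced_swapw w : reduced (swapw w) = reduced w.
Proof.
rewrite /reduced; elim: w => //= l w; case: w => //= l0 w IH.
rewrite IH; congr (_ && _); case: l l0 {IH} => a b [c d].
by rewrite /swl /linv /= !xpair_eqE; case: a; case: c.
Qed.

Lemma weval_swap P Q w c : weval Q P (swapw w) c = weval P Q w c.
Proof.
elim: w => //= l w ->; case: (weval P Q w c) => //= x.
by case: l => [[] []].
Qed.

Lemma elem_sym p q : elementary p q -> elementary q p.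
Proof.
case=> [[a b] [c d] e f g]; split=> //.
move=> x; rewrite andbC -e -f; exact: g.
Qed.

Lemma lib_swap p q p' q' w :
  liberates_p q p q' p' (swapw w) -> liberates_q p q p' q' w.
Proof.
case=> [[h1 h2 h3 h4] [i1 i2] [d1 d2 d3 d4] [e [rest [ew [a [Ha Hm]]]]] [Hd Hiv]].
have EE : forall c, (ess q c || ess p c) = (ess p c || ess q c) by move=> c; rewrite orbC.
split=> //.
- exists e, (swapw rest); split.
    by rewrite -(swapwK w) ew.
  exists a; split=> //.
  move=> c hc; rewrite -weval_swap; apply: Ha; by rewrite EE.
- split.
    by move=> c hc; rewrite -weval_swap; apply: Hd; rewrite EE.
  move=> c hc Hmin d ed; apply: (Hiv c); first by rewrite EE.
    by move=> c' hc'; apply: Hmin; rewrite -EE.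
  by rewrite weval_swap.
Qed.

Lemma main_p p q u : elementary p q -> reduced u ->
  exists v p' q', reduced (v ++ u) /\ liberates_p p q p' q' (v ++ u).
Proof.
move=> el hu.
have [fsP [dirP [fsQ [dirQ [SP SQ [hP lP] [hQ lQ] fixc]]]]] := elem_STR el.
have hP' : head 0 fsQ = dmin p by [].
case: (eqVneq (Elist p q (dmin p) (dmax p)) [::]) => Ene; last first.
  exact: (libp SP SQ hP lP hQ lQ fixc hu Ene).
set e := if u is l0 :: _ then (if l0.1 then l0.2 else true) else true.
exists [:: (true, e)], p, q; split.
  case: u hu @e => // l0 rest hr /=; apply: red_cons => //.
  case E: l0.1; last by apply: neq_linv; rewrite E.
  by case: l0 E {hr} => a b /= _; rewrite /linv /=; apply/eqP => [[_]]; case: b.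
have Eno : forall c, ess p c || ess q c -> False.
  move=> c; rewrite (E_mem SP SQ hP lP hQ lQ) Ene //.
have mq : dmax q = dmax p by rewrite (STR_dmax SQ) lQ.
case: el => [[Pp Pq] [Ip Iq] _ _ _].
split.
- by split.
- by split.
- by split.
- exists e, u; split=> //; exists (dmax q); split.
    by move=> c /Eno.
  have fM : fixedp q (dmax q) by rewrite /fixedp mq -lQ; exact: (STR_lastfix SQ).
  case: (e); split=> //; split=> // x _ /andP[a b]; by move: (lt_trans a b); rewrite ltxx.
- by split=> c /Eno.
Qed.

Theorem lemma3p9 (p q : piso) (u : word) :
  elementary p q -> reduced u ->
  (exists (v : word) (p' q' : piso),
      wlen (v ++ u) = (wlen v + wlen u)%N /\
      liberates_p p q p' q' (reduce (v ++ u))) /\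
  (exists (v : word) (p' q' : piso),
      wlen (v ++ u) = (wlen v + wlen u)%N /\
      liberates_q p q p' q' (reduce (v ++ u))).
Proof.
move=> el hu; split.
  have [v [p' [q' [hr hl]]]] := main_p el hu.
  by exists v, p', q'; rewrite wlen_cat // reduce_id.
have hu' : reduced (swapw u) by rewrite reduced_swapw.
have [v [q' [p' [hr hl]]]] := main_p (elem_sym el) hu'.
have hr' : reduced (swapw v ++ u) by rewrite -reduced_swapw swapw_cat swapwK.
exists (swapw v), p', q'; rewrite wlen_cat // reduce_id //; split=> //.
apply: lib_swap; by rewrite swapw_cat swapwK.
Qed.
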